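(* For the SVIQS system, assume $\omega\ge\gamma=\eta$ and $R_0>1$. Then the system has a unique endemic equilibrium $E^*=(S_k^*,V_k^*,I_k^*,Q_k^* )_{k=1}^n$ (equilibrium with nonnegative components and $\Theta>0$), and every solution whose initial data satisfy $S_k(0),V_k(0),I_k(0),Q_k(0)\ge0$, $S_k(0)+V_k(0)+I_k(0)+Q_k(0)=N_k^*$ for all $k$, and $\sum_{k=1}^n p(k)I_k(0)>0$, satisfies $\lim_{t\to\infty}S_k(t)=S_k^*$, $\lim_{t\to\infty}V_k(t)=V_k^*$, $\lim_{t\to\infty}I_k(t)=I_k^*$, $\lim_{t\to\infty}Q_k(t)=Q_k^*$ for every $k$; i.e. $E^*$ is globally attractive.
   Context: Fix an integer $n\ge1$ and numbers $p(1),\dots,p(n)>0$ with $\sum_{k=1}^n p(k)=1$; set $\langle k\rangle=\sum_{k=1}^n kp(k)$. Fix constants $b>d>0$ and let $\Phi^*>0$ satisfy $\Phi^*=\frac{1}{\langle k\rangle}\sum_{i=1}^n \frac{i\,p(i)\,b\Phi^*}{d+bi\Phi^*}$. For $k=1,\dots,n$ put $N_k^*=\frac{bk\Phi^*}{d+bk\Phi^*}\in(0,1)$ and $\Lambda_k=bk(1-N_k^* )\Phi^*$ (so $\Lambda_k=dN_k^*>0$). Parameters: $\lambda(k)>0$, $\varphi(k)>0$, $\mu_k>0$ for $k=1,\dots,n$; constants $\beta,\gamma,\eta,\omega>0$ and $\delta\in[0,1]$. For functions $I_1(t),\dots,I_n(t)$ set $\Theta(t)=\frac{1}{\langle k\rangle}\sum_{i=1}^n\varphi(i)p(i)I_i(t)$.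 The SVIQS system is, for $k=1,\dots,n$: $S_k'=\Lambda_k-\lambda(k)S_k\Theta+\gamma I_k+\eta Q_k+\omega V_k-(\mu_k+d)S_k$, $V_k'=\mu_kS_k-\delta\lambda(k)V_k\Theta-(d+\omega)V_k$, $I_k'=\lambda(k)S_k\Theta+\delta\lambda(k)V_k\Theta-(\gamma+\beta+d)I_k$, $Q_k'=\beta I_k-(\eta+d)Q_k$. Its basic reproduction number is $R_0=\frac{1}{\langle k\rangle}\sum_{i=1}^n\frac{\lambda(i)\varphi(i)p(i)\Lambda_i(\omega+d+\delta\mu_i)}{d(\gamma+\beta+d)(\omega+\mu_i+d)}$. *)

(* Defs.v *)
From Stdlib Require Import Reals Lra.
Open Scope R_scope.

(* sumk n f = f 1 + f 2 + ... + f n  (indices 1..n, as in the paper) *)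
Fixpoint sumk (n : nat) (f : nat -> R) : R :=
  match n with
  | O => 0
  | S m => sumk m f + f (S m)
  end.

Definition kavg (n : nat) (p : nat -> R) : R := sumk n (fun k => INR k * p k).

Definition Nstar (b d Phi : R) (k : nat) : R :=
  b * INR k * Phi / (d + b * INR k * Phi).
Definition Lam (b d Phi : R) (k : nat) : R :=
  b * INR k * (1 - Nstar b d Phi k) * Phi.

Definition Theta (n : nat) (p phi : nat -> R) (I : nat -> R) : R :=
  / kavg n p * sumk n (fun i => phi i * p i * I i).

Definition Rnought (n : nat) (p : nat -> R) (b d Phi : R) (lam phi mu : nat -> R)
  (beta gamma omega delta : R) : R :=
  / kavg n p * sumk n (fun i =>
     lam i * phi i * p i * Lam b d Phi i * (omega + d + delta * mu i)
     / (d * (gamma + beta + d) * (omega + mu i + d))).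

(* Right-hand sides of the SVIQS system for node class k, with Theta = th *)
Definition fS (Lk lamk muk gamma eta omega d th Sk Vk Ik Qk : R) : R :=
  Lk - lamk * Sk * th + gamma * Ik + eta * Qk + omega * Vk - (muk + d) * Sk.
Definition fV (lamk muk delta omega d th Sk Vk : R) : R :=
  muk * Sk - delta * lamk * Vk * th - (d + omega) * Vk.
Definition fI (lamk delta gamma beta d th Sk Vk Ik : R) : R :=
  lamk * Sk * th + delta * lamk * Vk * th - (gamma + beta + d) * Ik.
Definition fQ (beta eta d Ik Qk : R) : R :=
  beta * Ik - (eta + d) * Qk.

Definition lim_infty (f : R -> R) (l : R) : Prop :=
  forall eps, eps > 0 -> exists T, forall t, t >= T -> Rabs (f t - l) < eps.

Definition right_cont0 (f : R -> R) : Prop :=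
  forall eps, eps > 0 -> exists del, del > 0 /\
    forall t, 0 <= t < del -> Rabs (f t - f 0) < eps.

Definition endemic_eq (n : nat) (p : nat -> R) (b d Phi : R)
  (lam phi mu : nat -> R) (beta gamma eta omega delta : R)
  (Ss Vs Is Qs : nat -> R) : Prop :=
  (forall k, (1 <= k <= n)%nat ->
     0 <= Ss k /\ 0 <= Vs k /\ 0 <= Is k /\ 0 <= Qs k) /\
  Theta n p phi Is > 0 /\
  (forall k, (1 <= k <= n)%nat ->
     let th := Theta n p phi Is in
     fS (Lam b d Phi k) (lam k) (mu k) gamma eta omega d th
        (Ss k) (Vs k) (Is k) (Qs k) = 0 /\
     fV (lam k) (mu k) delta omega d th (Ss k) (Vs k) = 0 /\
     fI (lam k) delta gamma beta d th (Ss k) (Vs k) (Is k) = 0 /\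
     fQ beta eta d (Is k) (Qs k) = 0).

Definition is_solution (n : nat) (p : nat -> R) (b d Phi : R)
  (lam phi mu : nat -> R) (beta gamma eta omega delta : R)
  (S V I Q : nat -> R -> R) : Prop :=
  forall k, (1 <= k <= n)%nat ->
    (forall t, 0 < t ->
       let th := Theta n p phi (fun i => I i t) in
       derivable_pt_lim (S k) t
         (fS (Lam b d Phi k) (lam k) (mu k) gamma eta omega d th
             (S k t) (V k t) (I k t) (Q k t)) /\
       derivable_pt_lim (V k) t
         (fV (lam k) (mu k) delta omega d th (S k t) (V k t)) /\
       derivable_pt_lim (I k) t
         (fI (lam k) delta gamma beta d th (S k t) (V k t) (I k t)) /\
       derivable_pt_lim (Q k) t
         (fQ beta eta d (I k t) (Q k t))) /\
    right_cont0 (S k) /\ right_cont0 (V k) /\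
    right_cont0 (I k) /\ right_cont0 (Q k).

(* Main.v *)
Require Import Defs.
From Stdlib Require Import Reals Lra Lia Psatz Classical ZArith.
Open Scope R_scope.

Lemma sumk_ext n f g : (forall k, (1 <= k <= n)%nat -> f k = g k) -> sumk n f = sumk n g.
Proof. induction n; simpl; intros H; auto. rewrite IHn; [rewrite H; auto; lia|]. intros; apply H; lia. Qed.

Lemma sumk_plus n f g : sumk n (fun k => f k + g k) = sumk n f + sumk n g.
Proof. induction n; simpl; [lra|]. rewrite IHn; lra. Qed.

Lemma sumk_minus n f g : sumk n (fun k => f k - g k) = sumk n f - sumk n g.
Proof. induction n; simpl; [lra|]. rewrite IHn; lra. Qed.

Lemma sumk_scal n c f : sumk n (fun k => c * f k) = c * sumk n f.
Proof. induction n; simpl; [lra|]. rewrite IHn; lra. Qed.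

Lemma sumk_const0 n : sumk n (fun _ => 0) = 0.
Proof. induction n; simpl; lra. Qed.

Lemma sumk_le n f g : (forall k, (1 <= k <= n)%nat -> f k <= g k) -> sumk n f <= sumk n g.
Proof. induction n; simpl; intros H; [lra|]. assert (H1 := H (S n)). assert (sumk n f <= sumk n g) by (apply IHn; intros; apply H; lia). assert (f (S n) <= g (S n)) by (apply H; lia). lra. Qed.

Lemma sumk_lt n f g : (1 <= n)%nat -> (forall k, (1 <= k <= n)%nat -> f k < g k) -> sumk n f < sumk n g.
Proof. induction n; simpl; intros Hn H; [lia|]. destruct n. simpl. assert (f 1%nat < g 1%nat) by (apply H; lia). lra.
 assert (sumk (S n) f < sumk (S n) g) by (apply IHn; [lia| intros; apply H; lia]). assert (f (S (S n)) < g (S (S n))) by (apply H; lia). lra. Qed.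

Lemma sumk_nonneg n f : (forall k, (1 <= k <= n)%nat -> 0 <= f k) -> 0 <= sumk n f.
Proof. intros H. rewrite <- (sumk_const0 n). apply sumk_le. auto. Qed.

Lemma sumk_pos n f : (1 <= n)%nat -> (forall k, (1 <= k <= n)%nat -> 0 < f k) -> 0 < sumk n f.
Proof. intros Hn H. rewrite <- (sumk_const0 n). apply sumk_lt; auto. Qed.

Lemma sumk_ge_term n f j : (forall k, (1 <= k <= n)%nat -> 0 <= f k) -> (1 <= j <= n)%nat -> f j <= sumk n f.
Proof. induction n; simpl; intros H Hj; [lia|]. destruct (Nat.eq_dec j (S n)).
 - subst. assert (0 <= sumk n f) by (apply sumk_nonneg; intros; apply H; lia). lra.
 - assert (f j <= sumk n f) by (apply IHn; [intros; apply H; lia| lia]). assert (0 <= f (S n)) by (apply H; lia). lra. Qed.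

Lemma sumk_le_term n f j : (forall k, (1 <= k <= n)%nat -> f k <= 0) -> (1 <= j <= n)%nat -> sumk n f <= f j.
Proof. intros H Hj. assert (- f j <= sumk n (fun k => - f k)).
 { apply (sumk_ge_term n (fun k => - f k)); auto. intros k Hk; specialize (H k Hk); lra. }
 replace (sumk n (fun k => - f k)) with (-1 * sumk n f) in H0. lra.
 rewrite <- sumk_scal. apply sumk_ext. intros; ring. Qed.

Lemma sumk_exists_pos n f : 0 < sumk n f -> exists j, (1 <= j <= n)%nat /\ 0 < f j.
Proof. induction n; simpl; intros H; [lra|]. destruct (Rlt_or_le 0 (f (S n))).
 - exists (S n); split; [lia| auto].
 - destruct IHn as [j [Hj Hf]]; [lra|]. exists j; split; [lia|auto]. Qed.

Lemma sumk_abs n f : Rabs (sumk n f) <= sumk n (fun k => Rabs (f k)).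
Proof. induction n; simpl. rewrite Rabs_R0; lra. eapply Rle_trans; [apply Rabs_triang|]. lra. Qed.

Lemma sumk_deriv n (F : nat -> R -> R) (F' : nat -> R) t :
  (forall k, (1 <= k <= n)%nat -> derivable_pt_lim (F k) t (F' k)) ->
  derivable_pt_lim (fun s => sumk n (fun k => F k s)) t (sumk n F').
Proof. induction n; simpl; intros H.
 - apply derivable_pt_lim_const.
 - apply (derivable_pt_lim_plus (fun s => sumk n (fun k => F k s)) (F (S n))).
   apply IHn; intros; apply H; lia. apply H; lia. Qed.

Lemma mvt_nonpos (f f' : R -> R) a b :
  a < b -> (forall c, a <= c <= b -> derivable_pt_lim f c (f' c)) ->
  (forall c, a < c < b -> f' c <= 0) -> f b <= f a.
Proof. intros Hab Hd Hn. destruct (MVT_cor2 f f' a b Hab Hd) as [c [Hc Hc2]].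
 specialize (Hn c Hc2). nra. Qed.

Lemma mvt_pos (f f' : R -> R) a b :
  a < b -> (forall c, a <= c <= b -> derivable_pt_lim f c (f' c)) ->
  (forall c, a < c < b -> 0 < f' c) -> f a < f b.
Proof. intros Hab Hd Hn. destruct (MVT_cor2 f f' a b Hab Hd) as [c [Hc Hc2]].
 specialize (Hn c Hc2). nra. Qed.

Lemma mvt_abs (f f' : R -> R) a b K :
  a < b -> (forall c, a <= c <= b -> derivable_pt_lim f c (f' c)) ->
  (forall c, a < c < b -> Rabs (f' c) <= K) -> Rabs (f b - f a) <= K * (b - a).
Proof. intros Hab Hd Hn. destruct (MVT_cor2 f f' a b Hab Hd) as [c [Hc Hc2]].
 specialize (Hn c Hc2). rewrite Hc, Rabs_mult, (Rabs_right (b - a)) by lra. apply Rmult_le_compat_r; lra. Qed.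

Lemma exp_le_mono x y : x <= y -> exp x <= exp y.
Proof. intros H. destruct (Rle_lt_or_eq_dec x y H). left; apply exp_increasing; auto. rewrite e; lra. Qed.
Lemma exp_ge1 x : 0 <= x -> 1 <= exp x.
Proof. intros H. rewrite <- exp_0. apply exp_le_mono; auto. Qed.

Lemma expo_lb (f f' : R -> R) K : 0 <= K ->
  (forall t, 0 < t -> derivable_pt_lim f t (f' t)) ->
  (forall t, 0 < t -> 0 <= f' t + K * f t) -> right_cont0 f -> 0 <= f 0 ->
  forall t, 0 < t -> f 0 * exp (- (K * t)) <= f t.
Proof.
 intros HK Hd Hpos Hrc Hf0 t Ht.
 set (h := fun s => f s * exp (K * s)).
 assert (Hh : forall s, 0 < s -> derivable_pt_lim h s ((f' s + K * f s) * exp (K * s))).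
 { intros s Hs. unfold h. replace ((f' s + K * f s) * exp (K * s)) with
     (f' s * exp (K * s) + f s * (exp (K*s) * (K * 1))) by ring.
   apply (derivable_pt_lim_mult f (fun s => exp (K * s))). auto.
   apply (derivable_pt_lim_comp (fun s => K * s) exp). apply derivable_pt_lim_scal, derivable_pt_lim_id.
   apply derivable_pt_lim_exp. }
 assert (Hmono : forall s, 0 < s < t -> h s <= h t).
 { intros s Hs. assert (0 <= h t - h s); [|lra].
   destruct (MVT_cor2 h (fun s => (f' s + K * f s) * exp (K * s)) s t) as [c [Hc Hc2]]; [lra| intros; apply Hh; lra|].
   rewrite Hc. assert (0 <= f' c + K * f c) by (apply Hpos; lra). assert (0 < exp (K*c)) by apply exp_pos.
   apply Rmult_le_pos; [apply Rmult_le_pos|]; lra. }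
 assert (Hht : f 0 <= h t).
 { apply Rnot_lt_le; intros Hlt.
   set (eta := (f 0 - h t) / 2 / exp K).
   assert (HeK : 1 <= exp K) by (apply exp_ge1; auto).
   assert (Heta : eta > 0) by (unfold eta; apply Rdiv_lt_0_compat; [lra| apply exp_pos]).
   destruct (Hrc eta Heta) as [del [Hdel Hdel2]].
   set (s := Rmin (del/2) (Rmin (t/2) (1/2))).
   assert (Hs : 0 < s /\ s < del /\ s < t /\ s <= 1/2).
   { unfold s. repeat split; try (apply Rmin_glb_lt); try lra; try (apply Rmin_glb_lt; lra).
     apply Rle_lt_trans with (del/2); [apply Rmin_l| lra].
     apply Rle_lt_trans with (Rmin (t/2) (1/2)); [apply Rmin_r|]. apply Rle_lt_trans with (t/2); [apply Rmin_l|lra].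
     apply Rle_trans with (Rmin (t/2) (1/2)); [apply Rmin_r| apply Rmin_r]. }
   specialize (Hdel2 s ltac:(lra)). apply Rabs_def2 in Hdel2.
   specialize (Hmono s ltac:(lra)). unfold h in Hmono.
   assert (E1 : 1 <= exp (K * s)) by (apply exp_ge1; nra).
   assert (E2 : exp (K * s) <= exp K) by (apply exp_le_mono; nra).
   assert (Heq : eta * exp K = (f 0 - h t)/2) by (unfold eta; field; apply Rgt_not_eq, exp_pos).
   unfold h in Heq, Hlt, Hmono.
   destruct (Rle_lt_dec 0 (f s)).
   - assert (f s <= f s * exp (K * s)) by nra. assert (eta <= eta * exp K) by nra. lra.
   - assert (f s * exp K <= f s * exp (K * s)) by nra. assert (f 0 - eta <= f s) by lra.
     assert ((f 0 - eta) * exp K <= f s * exp K) by (apply Rmult_le_compat_r; [left; apply exp_pos| lra]).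
     assert (f 0 <= f 0 * exp K) by nra. lra. }
 unfold h in Hht. assert (0 < exp (- (K*t))) by apply exp_pos.
 replace (f t) with (f t * exp (K*t) * exp (-(K*t))).
 apply Rmult_le_compat_r; lra.
 rewrite Rmult_assoc, <- exp_plus. replace (K * t + - (K * t)) with 0 by ring. rewrite exp_0; ring.
Qed.

Lemma expo_pos (f f' : R -> R) K : 0 <= K ->
  (forall t, 0 < t -> derivable_pt_lim f t (f' t)) ->
  (forall t, 0 < t -> 0 < f' t + K * f t) -> right_cont0 f -> 0 <= f 0 ->
  forall t, 0 < t -> 0 < f t.
Proof.
 intros HK Hd Hpos Hrc Hf0 t Ht.
 assert (H2 : 0 <= f (t/2)).
 { assert (H := expo_lb f f' K HK Hd (fun s hs => Rlt_le _ _ (Hpos s hs)) Hrc Hf0 (t/2) ltac:(lra)).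
   assert (0 < exp (- (K * (t/2)))) by apply exp_pos. nra. }
 set (h := fun s => f s * exp (K * s)).
 assert (Hh : forall s, 0 < s -> derivable_pt_lim h s ((f' s + K * f s) * exp (K * s))).
 { intros s Hs. unfold h. replace ((f' s + K * f s) * exp (K * s)) with
     (f' s * exp (K * s) + f s * (exp (K*s) * (K * 1))) by ring.
   apply (derivable_pt_lim_mult f (fun s => exp (K * s))). auto.
   apply (derivable_pt_lim_comp (fun s => K * s) exp). apply derivable_pt_lim_scal, derivable_pt_lim_id.
   apply derivable_pt_lim_exp. }
 assert (h (t/2) < h t).
 { apply (mvt_pos h (fun s => (f' s + K * f s) * exp (K * s))). lra. intros; apply Hh; lra.
   intros c Hc. apply Rmult_lt_0_compat; [apply Hpos; lra| apply exp_pos]. }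
 unfold h in H. assert (0 < exp (K*(t/2))) by apply exp_pos. assert (0 < exp (K*t)) by apply exp_pos.
 assert (0 < f t * exp (K * t)) by nra. nra.
Qed.

Definition Lip t0 (f : R -> R) := exists K, forall t s, t0 <= t -> t0 <= s -> Rabs (f t - f s) <= K * Rabs (t - s).
Definition Bnd t0 (f : R -> R) := exists B, forall t, t0 <= t -> Rabs (f t) <= B.

Lemma Lip_pos t0 f : Lip t0 f -> exists K, 0 < K /\ forall t s, t0 <= t -> t0 <= s -> Rabs (f t - f s) <= K * Rabs (t - s).
Proof. intros [K HK]. exists (Rabs K + 1). split. pose proof (Rabs_pos K); lra.
 intros t s Ht Hs. eapply Rle_trans; [apply HK; auto|]. apply Rmult_le_compat_r. apply Rabs_pos.
 pose proof (Rle_abs K); lra. Qed.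

Lemma barbalat_dec (h h' F : R -> R) t0 :
 (forall t, t0 <= t -> derivable_pt_lim h t (h' t)) ->
 (forall t, t0 <= t -> h' t <= - F t) ->
 (forall t, t0 <= t -> 0 <= F t) -> (forall t, t0 <= t -> 0 <= h t) ->
 Lip t0 F -> lim_infty F 0.
Proof.
 intros Hd Hh' HF Hh HL. destruct (Lip_pos _ _ HL) as [K [HK HKL]].
 intros eps Heps. apply NNPP; intro Hn.
 assert (Hfreq : forall T, exists t, T <= t /\ t0 <= t /\ eps <= F t).
 { intros T. apply NNPP; intro H2. apply Hn. exists (Rmax T t0). intros t Ht.
   assert (T <= t) by (eapply Rle_trans; [apply Rmax_l| apply Rge_le; exact Ht]).
   assert (t0 <= t) by (eapply Rle_trans; [apply Rmax_r| apply Rge_le; exact Ht]).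
   destruct (Rlt_or_le (F t) eps). rewrite Rminus_0_r, Rabs_right by (apply Rle_ge; auto). auto.
   exfalso; apply H2; exists t; auto. }
 set (del := eps / (2 * K)). assert (Hdel : 0 < del) by (unfold del; apply Rdiv_lt_0_compat; lra).
 set (c := eps * del / 2). assert (Hc : 0 < c) by (unfold c; nra).
 assert (Hmono : forall a b, t0 <= a -> a <= b -> h b <= h a).
 { intros a b Ha Hb. destruct (Rle_lt_or_eq_dec a b Hb); [|subst; lra].
   apply (mvt_nonpos h h'); auto. intros; apply Hd; lra. intros c0 Hc0. specialize (Hh' c0 ltac:(lra)). specialize (HF c0 ltac:(lra)). lra. }
 assert (Hind : forall N : nat, exists t, t0 <= t /\ h t <= h t0 - INR N * c).
 { induction N.
   - exists t0. simpl. lra.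
   - destruct IHN as [tN [HtN HhN]]. destruct (Hfreq tN) as [t [Ht1 [Ht2 Ht3]]].
     exists (t + del). split. lra.
     assert (h (t + del) - h t <= - eps * del / 2).
     { destruct (MVT_cor2 h h' t (t + del)) as [xi [Hxi Hxi2]]. lra. intros; apply Hd; lra.
       rewrite Hxi. specialize (Hh' xi ltac:(lra)). specialize (HKL xi t ltac:(lra) ltac:(lra)).
       rewrite (Rabs_right (xi - t)) in HKL by lra.
       assert (F t - F xi <= K * (xi - t)) by (eapply Rle_trans; [|exact HKL]; rewrite <- Rabs_Ropp; replace (- (F xi - F t)) with (F t - F xi) by ring; apply Rle_abs).
       assert (K * (xi - t) <= K * del) by (apply Rmult_le_compat_l; lra).
       assert (K * del = eps / 2) by (unfold del; field; lra).
       assert (eps / 2 <= F xi) by lra. replace (t + del - t) with del by ring.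
       assert (h' xi <= - (eps/2)) by lra. assert (h' xi * del <= -(eps/2) * del) by (apply Rmult_le_compat_r; lra). lra. }
     rewrite S_INR. specialize (Hmono tN t HtN Ht1). unfold c in *. lra. }
 destruct (archimed (h t0 / c)) as [Har _].
 destruct (Hind (Z.to_nat (up (h t0 / c)))) as [t [Ht Hht]].
 rewrite INR_IZR_INZ, Z2Nat.id in Hht.
 - specialize (Hh t Ht). assert (h t0 / c * c = h t0) by (field; lra).
   assert (h t0 / c * c < IZR (up (h t0 / c)) * c) by (apply Rmult_lt_compat_r; auto). lra.
 - apply le_IZR. specialize (Hh t0 (Rle_refl _)). assert (0 <= h t0 / c) by (unfold Rdiv; apply Rmult_le_pos; [lra| left; apply Rinv_0_lt_compat; lra]). lra.
Qed.

Lemma barbalat_lim (f u : R -> R) t0 l :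
 (forall t, t0 <= t -> derivable_pt_lim f t (u t)) -> lim_infty f l -> Lip t0 u -> lim_infty u 0.
Proof.
 intros Hd Hl HL. destruct (Lip_pos _ _ HL) as [K [HK HKL]].
 intros eps Heps.
 set (del := eps / (2 * K)). assert (Hdel : 0 < del) by (unfold del; apply Rdiv_lt_0_compat; lra).
 destruct (Hl (eps * del / 4)) as [T HT]. assert (0 < eps * del) by nra. lra.
 exists (Rmax T t0). intros t Ht.
 assert (T <= t) by (eapply Rle_trans; [apply Rmax_l| apply Rge_le; exact Ht]).
 assert (t0 <= t) by (eapply Rle_trans; [apply Rmax_r| apply Rge_le; exact Ht]).
 rewrite Rminus_0_r. destruct (Rlt_or_le (Rabs (u t)) eps) as [|Hge]; auto. exfalso.
 destruct (MVT_cor2 f u t (t + del)) as [xi [Hxi Hxi2]]. lra. intros; apply Hd; lra.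
 specialize (HKL xi t ltac:(lra) ltac:(lra)). rewrite (Rabs_right (xi - t)) in HKL by lra.
 assert (K * (xi - t) <= K * del) by (apply Rmult_le_compat_l; lra).
 assert (K * del = eps / 2) by (unfold del; field; lra).
 assert (Rabs (u xi) >= eps / 2).
 { pose proof (Rabs_triang_inv (u t) (u xi)). rewrite <- Rabs_Ropp, Ropp_minus_distr in HKL. lra. }
 assert (Rabs (f (t + del) - f t) >= eps * del / 2).
 { rewrite Hxi. replace (t + del - t) with del by ring. rewrite Rabs_mult, (Rabs_right del) by lra. nra. }
 assert (HT1 := HT (t + del) ltac:(lra)). assert (HT2 := HT t ltac:(lra)).
 assert (Rabs (f (t + del) - f t) <= Rabs (f (t+del) - l) + Rabs (f t - l)).
 { replace (f (t + del) - f t) with ((f (t+del) - l) - (f t - l)) by ring.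
   eapply Rle_trans; [apply Rabs_triang|]. rewrite Rabs_Ropp; lra. }
 lra.
Qed.

Definition gfun (u : R) : R := u - 1 - ln u.

Lemma ln_le_sub1 u : 0 < u -> ln u <= u - 1.
Proof. intros H. pose proof (exp_ineq1_le (ln u)). rewrite exp_ln in H0; auto. lra. Qed.

Lemma ln_lt_sub1 u : 0 < u -> u <> 1 -> ln u < u - 1.
Proof. intros H H1. assert (ln u <> 0) by (apply ln_neq_0; auto). pose proof (exp_ineq1 (ln u) H0). rewrite exp_ln in H2; auto. lra. Qed.

Lemma gfun_nonneg u : 0 < u -> 0 <= gfun u.
Proof. intros H. unfold gfun. pose proof (ln_le_sub1 u H). lra. Qed.

Lemma gfun_pos u : 0 < u -> u <> 1 -> 0 < gfun u.
Proof. intros H H1. unfold gfun. pose proof (ln_lt_sub1 u H H1). lra. Qed.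

Lemma gfun_mono_r a b : 1 <= a -> a <= b -> gfun a <= gfun b.
Proof. intros Ha Hb. unfold gfun. assert (ln b - ln a <= b / a - 1).
 { replace (ln b - ln a) with (ln (b / a)). apply ln_le_sub1. apply Rdiv_lt_0_compat; lra.
   unfold Rdiv. rewrite ln_mult, ln_Rinv; try lra. apply Rinv_0_lt_compat; lra. }
 assert (b / a - 1 <= b - a). { assert (b / a - 1 = (b - a) / a) by (field; lra). rewrite H0.
   apply Rmult_le_reg_r with a. lra. unfold Rdiv. rewrite Rmult_assoc, Rinv_l by lra. nra. }
 lra. Qed.

Lemma gfun_mono_l a b : 0 < b -> b <= a -> a <= 1 -> gfun a <= gfun b.
Proof. intros Hb Hba Ha. unfold gfun. assert (ln b - ln a <= b / a - 1).
 { replace (ln b - ln a) with (ln (b / a)). apply ln_le_sub1. apply Rdiv_lt_0_compat; lra.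
   unfold Rdiv. rewrite ln_mult, ln_Rinv; try lra. apply Rinv_0_lt_compat; lra. }
 assert (b / a - 1 = (b - a) / a) by (field; lra).
 assert ((a - b)/a * a = a - b) by (field; lra).
 assert (0 <= (a - b)/a) by (unfold Rdiv; apply Rmult_le_pos; [lra| left; apply Rinv_0_lt_compat; lra]).
 assert (a - b <= (a-b)/a) by nra.
 assert ((b - a)/a = - ((a - b)/a)) by (field; lra).
 lra. Qed.

Lemma gfun_to1 (w : R -> R) t0 : (forall t, t0 <= t -> 0 < w t) ->
  lim_infty (fun t => gfun (w t)) 0 -> lim_infty w 1.
Proof.
 intros Hw Hl eps Heps. set (e := Rmin eps (1/2)).
 assert (He : 0 < e /\ e <= eps /\ e <= 1/2) by (unfold e; repeat split; [apply Rmin_glb_lt; lra| apply Rmin_l| apply Rmin_r]).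
 set (m := Rmin (gfun (1 + e)) (gfun (1 - e))).
 assert (Hm : 0 < m). { unfold m. apply Rmin_glb_lt; apply gfun_pos; lra. }
 destruct (Hl m Hm) as [T HT]. exists (Rmax T t0). intros t Ht.
 assert (T <= t) by (eapply Rle_trans; [apply Rmax_l| apply Rge_le; exact Ht]).
 assert (t0 <= t) by (eapply Rle_trans; [apply Rmax_r| apply Rge_le; exact Ht]).
 specialize (HT t ltac:(lra)). rewrite Rminus_0_r in HT. specialize (Hw t H0).
 assert (0 <= gfun (w t)) by (apply gfun_nonneg; auto). rewrite Rabs_right in HT by lra.
 apply Rabs_def1.
 - destruct (Rlt_or_le (w t - 1) e). lra. exfalso.
   assert (gfun (1 + e) <= gfun (w t)) by (apply gfun_mono_r; lra).
   assert (m <= gfun (1+e)) by apply Rmin_l. lra.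
 - destruct (Rlt_or_le (-e) (w t - 1)). lra. exfalso.
   assert (gfun (1 - e) <= gfun (w t)) by (apply gfun_mono_l; lra).
   assert (m <= gfun (1-e)) by apply Rmin_r. lra.
Qed.

Lemma lim_const c : lim_infty (fun _ => c) c.
Proof. intros eps H. exists 0. intros. rewrite Rminus_diag, Rabs_R0; lra. Qed.

Lemma lim_ext_ev (f g : R -> R) l T0 : (forall t, T0 <= t -> f t = g t) -> lim_infty f l -> lim_infty g l.
Proof. intros He Hl eps H. destruct (Hl eps H) as [T HT]. exists (Rmax T T0). intros t Ht.
 assert (T <= t) by (eapply Rle_trans; [apply Rmax_l| apply Rge_le; exact Ht]).
 assert (T0 <= t) by (eapply Rle_trans; [apply Rmax_r| apply Rge_le; exact Ht]).
 rewrite <- He by auto. apply HT; lra. Qed.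

Lemma lim_plus f g l m : lim_infty f l -> lim_infty g m -> lim_infty (fun t => f t + g t) (l + m).
Proof. intros Hf Hg eps H. destruct (Hf (eps/2)) as [T1 H1]; [lra|]. destruct (Hg (eps/2)) as [T2 H2]; [lra|].
 exists (Rmax T1 T2). intros t Ht.
 assert (T1 <= t) by (eapply Rle_trans; [apply Rmax_l| apply Rge_le; exact Ht]).
 assert (T2 <= t) by (eapply Rle_trans; [apply Rmax_r| apply Rge_le; exact Ht]).
 specialize (H1 t ltac:(lra)). specialize (H2 t ltac:(lra)).
 replace (f t + g t - (l + m)) with ((f t - l) + (g t - m)) by ring.
 eapply Rle_lt_trans; [apply Rabs_triang| lra]. Qed.

Lemma lim_scal c f l : lim_infty f l -> lim_infty (fun t => c * f t) (c * l).
Proof. intros Hf eps H. destruct (Hf (eps / (Rabs c + 1))) as [T HT].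
 apply Rdiv_lt_0_compat; [lra| pose proof (Rabs_pos c); lra].
 exists T. intros t Ht. specialize (HT t Ht).
 replace (c * f t - c * l) with (c * (f t - l)) by ring. rewrite Rabs_mult.
 assert (Rabs c * Rabs (f t - l) <= Rabs c * (eps / (Rabs c + 1))) by (apply Rmult_le_compat_l; [apply Rabs_pos| lra]).
 assert (Rabs c * (eps / (Rabs c + 1)) < eps).
 { pose proof (Rabs_pos c). apply Rmult_lt_reg_r with (Rabs c + 1). lra.
   replace (Rabs c * (eps / (Rabs c + 1)) * (Rabs c + 1)) with (Rabs c * eps) by (field; lra). nra. }
 lra. Qed.

Lemma lim_minus f g l m : lim_infty f l -> lim_infty g m -> lim_infty (fun t => f t - g t) (l - m).
Proof. intros Hf Hg. assert (H := lim_plus _ _ _ _ Hf (lim_scal (-1) _ _ Hg)).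
 replace (l - m) with (l + -1 * m) by ring. eapply lim_ext_ev with (T0 := 0); [|exact H]. intros; simpl; ring. Qed.

Lemma lim_mult f g l m : lim_infty f l -> lim_infty g m -> lim_infty (fun t => f t * g t) (l * m).
Proof. intros Hf Hg eps H.
 set (e := Rmin 1 (eps / (Rabs l + Rabs m + 2))).
 assert (He : 0 < e /\ e <= 1 /\ e * (Rabs l + Rabs m + 2) <= eps).
 { pose proof (Rabs_pos l); pose proof (Rabs_pos m). unfold e. repeat split.
   apply Rmin_glb_lt; [lra| apply Rdiv_lt_0_compat; lra]. apply Rmin_l.
   apply Rle_trans with ((eps / (Rabs l + Rabs m + 2)) * (Rabs l + Rabs m + 2)).
   apply Rmult_le_compat_r; [lra| apply Rmin_r]. right; field; lra. }
 destruct (Hf (e/2)) as [T1 H1]; [lra|]. destruct (Hg (e/2)) as [T2 H2]; [lra|].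
 exists (Rmax T1 T2). intros t Ht.
 assert (T1 <= t) by (eapply Rle_trans; [apply Rmax_l| apply Rge_le; exact Ht]).
 assert (T2 <= t) by (eapply Rle_trans; [apply Rmax_r| apply Rge_le; exact Ht]).
 specialize (H1 t ltac:(lra)). specialize (H2 t ltac:(lra)).
 replace (f t * g t - l * m) with ((f t - l) * (g t - m) + l * (g t - m) + m * (f t - l)) by ring.
 eapply Rle_lt_trans. eapply Rle_trans. apply Rabs_triang. apply Rplus_le_compat_r. apply Rabs_triang.
 rewrite !Rabs_mult. pose proof (Rabs_pos (f t - l)); pose proof (Rabs_pos (g t - m)); pose proof (Rabs_pos l); pose proof (Rabs_pos m).
 assert (Rabs (f t - l) * Rabs (g t - m) <= e/2 * (e/2)) by (apply Rmult_le_compat; lra).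
 assert (Rabs l * Rabs (g t - m) <= Rabs l * (e/2)) by (apply Rmult_le_compat_l; lra).
 assert (Rabs m * Rabs (f t - l) <= Rabs m * (e/2)) by (apply Rmult_le_compat_l; lra).
 nra. Qed.

Lemma lim_inv f l : l <> 0 -> lim_infty f l -> lim_infty (fun t => / f t) (/ l).
Proof. intros Hl Hf eps H.
 assert (Hal : 0 < Rabs l) by (apply Rabs_pos_lt; auto).
 set (e := Rmin (Rabs l / 2) (eps * (Rabs l * Rabs l) / 2)).
 assert (He : 0 < e /\ e <= Rabs l / 2 /\ e <= eps * (Rabs l * Rabs l) / 2).
 { unfold e; repeat split; [apply Rmin_glb_lt; [lra| ]| apply Rmin_l| apply Rmin_r]. assert (0 < Rabs l * Rabs l) by nra. nra. }
 destruct (Hf e) as [T HT]; [lra|]. exists T. intros t Ht. specialize (HT t Ht).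
 assert (Rabs (f t) >= Rabs l / 2).
 { pose proof (Rabs_triang_inv l (f t)). rewrite Rabs_minus_sym in HT. lra. }
 assert (Hft : f t <> 0) by (intro Hz; rewrite Hz, Rabs_R0 in H0; lra).
 replace (/ f t - / l) with ((l - f t) / (f t * l)) by (field; auto).
 unfold Rdiv. rewrite Rabs_mult, Rabs_inv, Rabs_mult, <- Rabs_Ropp, Ropp_minus_distr.
 assert (0 < Rabs (f t) * Rabs l) by nra.
 apply Rmult_lt_reg_r with (Rabs (f t) * Rabs l). auto.
 rewrite Rmult_assoc, Rinv_l by lra. rewrite Rmult_1_r.
 assert (Rabs l / 2 * Rabs l <= Rabs (f t) * Rabs l) by (apply Rmult_le_compat_r; lra).
 nra. Qed.

Lemma lim_sq f l : lim_infty (fun t => (f t - l) * (f t - l)) 0 -> lim_infty f l.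
Proof. intros H eps He. destruct (H (eps * eps)) as [T HT]; [nra|]. exists T. intros t Ht.
 specialize (HT t Ht). rewrite Rminus_0_r in HT. rewrite Rabs_right in HT by (apply Rle_ge, Rle_0_sqr).
 destruct (Rlt_or_le (Rabs (f t - l)) eps); auto. exfalso.
 assert (eps * eps <= Rabs (f t - l) * Rabs (f t - l)) by (apply Rmult_le_compat; lra).
 rewrite <- Rabs_mult, Rabs_right in H1 by (apply Rle_ge, Rle_0_sqr). lra. Qed.

Definition LB t0 f := Lip t0 f /\ Bnd t0 f.

Lemma LB_const t0 c : LB t0 (fun _ => c).
Proof. split. exists 0. intros. rewrite Rminus_diag, Rabs_R0. lra. exists (Rabs c). intros; lra. Qed.

Lemma LB_ext t0 f g : (forall t, t0 <= t -> f t = g t) -> LB t0 f -> LB t0 g.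
Proof. intros He [[K HK] [B HB]]. split. exists K. intros t s Ht Hs. rewrite <- !He by auto. auto.
 exists B. intros t Ht. rewrite <- He; auto. Qed.

Lemma LB_plus t0 f g : LB t0 f -> LB t0 g -> LB t0 (fun t => f t + g t).
Proof. intros [[K1 H1] [B1 G1]] [[K2 H2] [B2 G2]]. split.
 - exists (K1 + K2). intros t s Ht Hs. replace (f t + g t - (f s + g s)) with ((f t - f s) + (g t - g s)) by ring.
   eapply Rle_trans; [apply Rabs_triang|]. specialize (H1 t s Ht Hs); specialize (H2 t s Ht Hs). lra.
 - exists (B1 + B2). intros t Ht. eapply Rle_trans; [apply Rabs_triang|]. specialize (G1 t Ht); specialize (G2 t Ht); lra. Qed.

Lemma LB_scal t0 c f : LB t0 f -> LB t0 (fun t => c * f t).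
Proof. intros [[K1 H1] [B1 G1]]. split.
 - exists (Rabs c * K1). intros t s Ht Hs. replace (c * f t - c * f s) with (c * (f t - f s)) by ring.
   rewrite Rabs_mult, Rmult_assoc. apply Rmult_le_compat_l; [apply Rabs_pos| auto].
 - exists (Rabs c * B1). intros t Ht. rewrite Rabs_mult. apply Rmult_le_compat_l; [apply Rabs_pos| auto]. Qed.

Lemma LB_minus t0 f g : LB t0 f -> LB t0 g -> LB t0 (fun t => f t - g t).
Proof. intros Hf Hg. apply LB_ext with (fun t => f t + (-1) * g t). intros; ring.
 apply LB_plus; auto. apply LB_scal; auto. Qed.

Lemma LB_mult t0 f g : LB t0 f -> LB t0 g -> LB t0 (fun t => f t * g t).
Proof. intros [[K1 H1] [B1 G1]] [[K2 H2] [B2 G2]]. split.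
 - exists (B1 * K2 + B2 * K1). intros t s Ht Hs.
   replace (f t * g t - f s * g s) with (f t * (g t - g s) + g s * (f t - f s)) by ring.
   eapply Rle_trans; [apply Rabs_triang|]. rewrite !Rabs_mult.
   specialize (H1 t s Ht Hs); specialize (H2 t s Ht Hs). specialize (G1 t Ht); specialize (G2 s Hs).
   pose proof (Rabs_pos (f t)); pose proof (Rabs_pos (g s)); pose proof (Rabs_pos (t - s)).
   pose proof (Rabs_pos (g t - g s)); pose proof (Rabs_pos (f t - f s)).
   assert (Rabs (f t) * Rabs (g t - g s) <= B1 * (K2 * Rabs (t - s))) by (apply Rmult_le_compat; lra).
   assert (Rabs (g s) * Rabs (f t - f s) <= B2 * (K1 * Rabs (t - s))) by (apply Rmult_le_compat; lra).
   lra.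
 - exists (B1 * B2). intros t Ht. rewrite Rabs_mult. specialize (G1 t Ht); specialize (G2 t Ht).
   apply Rmult_le_compat; auto; apply Rabs_pos. Qed.

Lemma LB_inv t0 f m : 0 < m -> (forall t, t0 <= t -> m <= f t) -> LB t0 f -> LB t0 (fun t => / f t).
Proof. intros Hm Hfm [[K1 H1] [B1 G1]]. split.
 - exists (K1 / (m * m)). intros t s Ht Hs. specialize (Hfm t Ht) as Ht'. specialize (Hfm s Hs) as Hs'.
   replace (/ f t - / f s) with ((f s - f t) / (f t * f s)) by (field; lra).
   unfold Rdiv. rewrite Rabs_mult, Rabs_inv, Rabs_minus_sym.
   rewrite (Rabs_right (f t * f s)) by nra.
   assert (m * m <= f t * f s) by (apply Rmult_le_compat; lra).
   assert (/ (f t * f s) <= / (m * m)) by (apply Rinv_le_contravar; nra).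
   specialize (H1 t s Ht Hs). pose proof (Rabs_pos (f t - f s)). pose proof (Rabs_pos (t - s)).
   assert (0 < / (f t * f s)) by (apply Rinv_0_lt_compat; nra).
   assert (Rabs (f t - f s) * / (f t * f s) <= K1 * Rabs (t - s) * / (m * m)) by (apply Rmult_le_compat; lra).
   lra.
 - exists (/ m). intros t Ht. specialize (Hfm t Ht). rewrite Rabs_right.
   apply Rinv_le_contravar; lra. apply Rle_ge; left; apply Rinv_0_lt_compat; lra. Qed.

Lemma ln_lip a b m : 0 < m -> m <= a -> m <= b -> Rabs (ln a - ln b) <= Rabs (a - b) / m.
Proof. intros Hm Ha Hb.
 assert (Hxy : forall x y, m <= x -> m <= y -> ln x - ln y <= Rabs (x - y) / m).
 { intros x y Hx Hy. replace (ln x - ln y) with (ln (x / y)). eapply Rle_trans. apply ln_le_sub1.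
   apply Rdiv_lt_0_compat; lra. replace (x / y - 1) with ((x - y) / y) by (field; lra).
   unfold Rdiv. apply Rle_trans with (Rabs (x - y) * / y). apply Rmult_le_compat_r. left; apply Rinv_0_lt_compat; lra. apply Rle_abs.
   apply Rmult_le_compat_l. apply Rabs_pos. apply Rinv_le_contravar; lra.
   unfold Rdiv. rewrite ln_mult, ln_Rinv; try lra. apply Rinv_0_lt_compat; lra. }
 unfold Rabs at 1. destruct (Rcase_abs (ln a - ln b)). rewrite Rabs_minus_sym. specialize (Hxy b a Hb Ha). lra. apply Hxy; auto. Qed.

Lemma LB_ln t0 f m : 0 < m -> (forall t, t0 <= t -> m <= f t) -> LB t0 f -> LB t0 (fun t => ln (f t)).
Proof. intros Hm Hfm [[K1 H1] [B1 G1]]. split.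
 - exists (K1 / m). intros t s Ht Hs. eapply Rle_trans. apply (ln_lip (f t) (f s) m); auto.
   unfold Rdiv. apply Rle_trans with (K1 * Rabs (t - s) * / m).
   apply Rmult_le_compat_r. left; apply Rinv_0_lt_compat; lra. auto. right; ring.
 - exists (Rabs (ln m) + B1). intros t Ht. specialize (Hfm t Ht) as Hf. specialize (G1 t Ht).
   assert (ln m <= ln (f t)) by (destruct (Rle_lt_or_eq_dec m (f t) Hf) as [Hl|Heq]; [left; apply ln_increasing; lra| rewrite Heq; lra]).
   pose proof (ln_le_sub1 (f t) ltac:(lra)) as X1. pose proof (Rle_abs (f t)) as X2. pose proof (Rle_abs (- ln m)) as X3. rewrite Rabs_Ropp in X3.
   pose proof (Rabs_pos (ln m)). pose proof (Rabs_pos (f t)). unfold Rabs at 1. destruct (Rcase_abs (ln (f t))); lra. Qed.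

Lemma LB_deriv t0 f f' : (forall t, t0 <= t -> derivable_pt_lim f t (f' t)) -> Bnd t0 f' -> Bnd t0 f -> LB t0 f.
Proof. intros Hd [K HK] Hb. split; auto. exists K. intros t s Ht Hs.
 destruct (Rtotal_order t s) as [Hlt|[Heq|Hgt]].
 - rewrite Rabs_minus_sym, (Rabs_minus_sym t). rewrite (Rabs_right (s - t)) by lra.
   apply (mvt_abs f f'); auto. intros; apply Hd; lra. intros; apply HK; lra.
 - subst. rewrite !Rminus_diag, Rabs_R0. lra.
 - rewrite (Rabs_right (t - s)) by lra. apply (mvt_abs f f'); auto. intros; apply Hd; lra. intros; apply HK; lra. Qed.

Lemma LB_sumk t0 n (F : nat -> R -> R) : (forall k, (1 <= k <= n)%nat -> LB t0 (F k)) ->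
  LB t0 (fun t => sumk n (fun k => F k t)).
Proof. induction n; intros H; simpl. apply LB_const.
 apply (LB_plus t0 (fun t => sumk n (fun k => F k t)) (F (S n))). apply IHn; intros; apply H; lia. apply H; lia. Qed.

Lemma Bnd_of_bounds t0 f a b : (forall t, t0 <= t -> a <= f t <= b) -> Bnd t0 f.
Proof. intros H. exists (Rabs a + Rabs b). intros t Ht. specialize (H t Ht). pose proof (Rle_abs a); pose proof (Rle_abs (-a)); rewrite Rabs_Ropp in H1.
 pose proof (Rle_abs b); pose proof (Rle_abs (-b)); rewrite Rabs_Ropp in H3. unfold Rabs at 1; destruct (Rcase_abs (f t)); lra. Qed.

Definition nm (x : R) := Rmin x 0 * Rmin x 0.

Lemma nm_ineq a b : Rabs (nm b - nm a - 2 * Rmin a 0 * (b - a)) <= (b - a) * (b - a).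
Proof. pose proof (Rle_0_sqr (b - a)) as Hs. pose proof (Rle_0_sqr b) as Hb. pose proof (Rle_0_sqr a) as Ha. unfold Rsqr in *.
 unfold nm, Rmin. destruct (Rle_dec a 0); destruct (Rle_dec b 0); apply Rabs_le.
 - split; nra.
 - assert (0 <= - a * b) by (apply Rmult_le_pos; lra). split; nra.
 - assert (0 <= - a * b) by (assert (0 <= a * - b) by (apply Rmult_le_pos; lra); lra). split; nra.
 - split; nra. Qed.

Lemma nm_deriv x : derivable_pt_lim nm x (2 * Rmin x 0).
Proof. intros eps Heps. exists (mkposreal eps Heps). intros h Hh Hha. simpl in Hha.
 pose proof (nm_ineq x (x + h)). replace (x + h - x) with h in H by ring.
 replace ((nm (x + h) - nm x) / h - 2 * Rmin x 0) with ((nm (x + h) - nm x - 2 * Rmin x 0 * h) / h) by (field; auto).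
 unfold Rdiv. rewrite Rabs_mult, Rabs_inv.
 apply Rle_lt_trans with (Rabs h). apply Rmult_le_reg_r with (Rabs h). apply Rabs_pos_lt; auto.
 rewrite Rmult_assoc, Rinv_l by (apply Rabs_no_R0; auto). rewrite Rmult_1_r, <- Rabs_mult, (Rabs_right (h*h)) by (apply Rle_ge, Rle_0_sqr). exact H. auto. Qed.

Lemma nm_nonneg x : 0 <= nm x.
Proof. unfold nm. apply Rle_0_sqr. Qed.

Lemma nm_zero x : 0 <= x -> nm x = 0.
Proof. intros H. unfold nm, Rmin. destruct (Rle_dec x 0). replace x with 0 by lra. ring. ring. Qed.

Lemma nm_le_sq x y : 0 <= y -> nm x <= (x - y) * (x - y).
Proof. intros H. pose proof (Rle_0_sqr (x - y)). unfold Rsqr in *. unfold nm, Rmin. destruct (Rle_dec x 0); nra. Qed.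

Lemma nm_zero_inv x : nm x <= 0 -> 0 <= x.
Proof. unfold nm, Rmin. destruct (Rle_dec x 0); intros; [|lra]. destruct (Rle_lt_or_eq_dec x 0 r); [|lra]. assert (0 < x * x) by nra. lra. Qed.

Lemma rmin_mul x : Rmin x 0 * x = nm x.
Proof. unfold nm, Rmin. destruct (Rle_dec x 0); ring. Qed.

Lemma rmin_le x : Rmin x 0 <= x.
Proof. apply Rmin_l. Qed.
Lemma rmin_nonpos x : Rmin x 0 <= 0.
Proof. apply Rmin_r. Qed.

Lemma rc_sqdiff f : right_cont0 f -> forall eps, eps > 0 -> exists del, del > 0 /\
   forall t, 0 <= t < del -> (f t - f 0) * (f t - f 0) < eps.
Proof. intros H eps He. destruct (H (Rmin 1 eps)) as [del [Hd Hd2]]. apply Rmin_glb_lt; lra.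
 exists del; split; auto. intros t Ht. specialize (Hd2 t Ht).
 assert (Rmin 1 eps <= 1) by apply Rmin_l. assert (Rmin 1 eps <= eps) by apply Rmin_r.
 pose proof (Rabs_pos (f t - f 0)).
 assert (Rabs (f t - f 0) * Rabs (f t - f 0) < Rmin 1 eps * Rmin 1 eps) by (apply Rmult_le_0_lt_compat; lra).
 rewrite <- Rabs_mult, Rabs_right in H3 by (apply Rle_ge, Rle_0_sqr).
 assert (0 < Rmin 1 eps) by lra. nra. Qed.

Definition small0 (g : R -> R) := forall eps, eps > 0 -> exists del, del > 0 /\ forall t, 0 <= t < del -> g t < eps.

Lemma small0_plus g h : small0 g -> small0 h -> small0 (fun t => g t + h t).
Proof. intros Hg Hh eps He. destruct (Hg (eps/2)) as [d1 [Hd1 H1]]; [lra|]. destruct (Hh (eps/2)) as [d2 [Hd2 H2]]; [lra|].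
 exists (Rmin d1 d2). split. apply Rmin_glb_lt; lra. intros t Ht.
 assert (Rmin d1 d2 <= d1) by apply Rmin_l. assert (Rmin d1 d2 <= d2) by apply Rmin_r.
 specialize (H1 t ltac:(lra)). specialize (H2 t ltac:(lra)). lra. Qed.

Lemma small0_sumk n (G : nat -> R -> R) : (forall k, (1 <= k <= n)%nat -> small0 (G k)) ->
  small0 (fun t => sumk n (fun k => G k t)).
Proof. induction n; intros H; simpl. intros eps He. exists 1. split; [lra|]. intros; lra.
 apply (small0_plus (fun t => sumk n (fun k => G k t)) (G (S n))). apply IHn; intros; apply H; lia. apply H; lia. Qed.

Lemma bnd_0T f f' : right_cont0 f -> (forall t, 0 < t -> derivable_pt_lim f t (f' t)) ->
  forall T, exists B, forall t, 0 <= t <= T -> Rabs (f t) <= B.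
Proof. intros Hrc Hd T. destruct (Hrc 1 ltac:(lra)) as [del [Hdel H1]].
 assert (Hc : forall c, 0 < c -> continuity_pt f c).
 { intros c Hc. apply derivable_continuous_pt. exists (f' c). apply Hd; auto. }
 destruct (Rlt_or_le T (del/2)) as [HT|HT].
 - exists (Rabs (f 0) + 1). intros t Ht. specialize (H1 t ltac:(lra)).
   pose proof (Rabs_triang_inv (f t) (f 0)). lra.
 - destruct (continuity_ab_maj f (del/2) T HT) as [M1 [HM1 HM1']]. intros; apply Hc; lra.
   destruct (continuity_ab_maj (fun t => - f t) (del/2) T HT) as [M2 [HM2 HM2']]. intros; apply continuity_pt_opp, Hc; lra.
   exists (Rabs (f 0) + 1 + Rabs (f M1) + Rabs (f M2)). intros t Ht.
   pose proof (Rabs_pos (f 0)); pose proof (Rabs_pos (f M1)); pose proof (Rabs_pos (f M2)).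
   destruct (Rlt_or_le t (del/2)).
   + specialize (H1 t ltac:(lra)). pose proof (Rabs_triang_inv (f t) (f 0)). lra.
   + specialize (HM1 t ltac:(lra)). specialize (HM2 t ltac:(lra)). simpl in HM2.
     pose proof (Rle_abs (f M1)) as Y1. pose proof (Rle_abs (- f M2)) as Y2. rewrite Rabs_Ropp in Y2.
     unfold Rabs at 1. destruct (Rcase_abs (f t)); lra. Qed.

Lemma bnd_family n (P : nat -> R -> Prop) :
  (forall k B B', B <= B' -> P k B -> P k B') ->
  (forall k, (1 <= k <= n)%nat -> exists B, P k B) -> exists B, forall k, (1 <= k <= n)%nat -> P k B.
Proof. intros Hmono. induction n; intros H. exists 0. intros; lia.
 destruct IHn as [B1 HB1]. intros; apply H; lia. destruct (H (S n)) as [B2 HB2]. lia.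
 exists (Rmax B1 B2). intros k Hk. destruct (Nat.eq_dec k (S n)). subst. eapply Hmono; [apply Rmax_r| auto].
 eapply Hmono; [apply Rmax_l| apply HB1; lia]. Qed.

Lemma lyap_identity (S V I Th Ss Vs Is Ths la mu del gam bet d om N : R) :
 0 < S -> 0 < V -> 0 < I -> 0 < Th -> 0 < Ss -> 0 < Vs -> 0 < Is -> 0 < Ths -> 0 < d + gam ->
 d*N + gam*(N - Ss - Vs) + om*Vs - (mu+d)*Ss = la*Ss*Ths ->
 mu*Ss = del*la*Vs*Ths + (d+om)*Vs ->
 (gam+bet+d)*Is = la*Ths*(Ss + del*Vs) ->
 let x := S/Ss in let y := V/Vs in let z := I/Is in let r := Th/Ths in
 let P := la*Ss*Ths in let R := del*la*Vs*Ths in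
 (1 - Ss/S)*(d*N + gam*(N - S - V) + om*V - (mu+d)*S - la*S*Th)
 + (1 - Vs/V)*(mu*S - del*la*V*Th - (d+om)*V)
 + (1 - Is/I)*(la*Th*(S + del*V) - (gam+bet+d)*I)
 = P*(2 - 1/x - x*r/z) + R*(3 - y*r/z - x/y - 1/x) + (P+R)*(r - z)
   + (d+gam)*Vs*(3 - y - x/y - 1/x) - (om - gam)*Vs*(x-y)*(x-y)/(x*y) - (d+gam)*(S-Ss)*(S-Ss)/S.
Proof.
 intros HS HV HI HTh HSs HVs HIs HThs Hdg E1 E2 E3.
 assert (HN : N = (la*Ss*Ths + gam*(Ss+Vs) - om*Vs + (mu+d)*Ss)/(d+gam)).
 { replace N with (((d+gam)*N)/(d+gam)) at 1 by (field; lra). f_equal. lra. }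
 assert (Hmu : mu = (del*la*Vs*Ths + (d+om)*Vs)/Ss).
 { replace mu with ((mu*Ss)/Ss) at 1 by (field; lra). f_equal. lra. }
 assert (Hk : gam+bet+d = la*Ths*(Ss + del*Vs)/Is).
 { replace (gam+bet+d) with (((gam+bet+d)*Is)/Is) at 1 by (field; lra). f_equal. lra. }
 cbv zeta. rewrite Hk. rewrite HN. rewrite Hmu. field.
 repeat split; lra.
Qed.

Lemma ln_div' a b : 0 < a -> 0 < b -> ln (a / b) = ln a - ln b.
Proof. intros. unfold Rdiv. rewrite ln_mult, ln_Rinv. ring. auto. auto. apply Rinv_0_lt_compat; auto. Qed.

Lemma lyap_k (S V I Th Ss Vs Is Ths la mu del gam bet d om N : R) :
 0 < S -> 0 < V -> 0 < I -> 0 < Th -> 0 < Ss -> 0 < Vs -> 0 < Is -> 0 < Ths -> 0 < la -> 0 <= del ->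
 0 < gam -> 0 < d -> gam <= om ->
 d*N + gam*(N - Ss - Vs) + om*Vs - (mu+d)*Ss = la*Ss*Ths ->
 mu*Ss = del*la*Vs*Ths + (d+om)*Vs ->
 (gam+bet+d)*Is = la*Ths*(Ss + del*Vs) ->
 (1 - Ss/S)*(d*N + gam*(N - S - V) + om*V - (mu+d)*S - la*S*Th)
 + (1 - Vs/V)*(mu*S - del*la*V*Th - (d+om)*V)
 + (1 - Is/I)*(la*Th*(S + del*V) - (gam+bet+d)*I)
 <= - ((d+gam)*(S-Ss)*(S-Ss)/S + (d+gam)*Vs*gfun (V/Vs) + la*Ss*Ths*gfun ((S/Ss)*(Th/Ths)/(I/Is)))
    + (gam+bet+d)*Is*(Th/Ths - I/Is - ln (Th/Ths) + ln (I/Is)).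
Proof.
 intros HS HV HI HTh HSs HVs HIs HThs Hla Hdel Hgam Hd Hom E1 E2 E3.
 rewrite (lyap_identity S V I Th Ss Vs Is Ths la mu del gam bet d om N) by (auto; lra).
 set (x := S/Ss). set (y := V/Vs). set (z := I/Is). set (r := Th/Ths).
 assert (Hx : 0 < x) by (apply Rdiv_lt_0_compat; auto).
 assert (Hy : 0 < y) by (apply Rdiv_lt_0_compat; auto).
 assert (Hz : 0 < z) by (apply Rdiv_lt_0_compat; auto).
 assert (Hr : 0 < r) by (apply Rdiv_lt_0_compat; auto).
 assert (HP : 0 < la*Ss*Ths) by (apply Rmult_lt_0_compat; [apply Rmult_lt_0_compat|]; auto).
 assert (HR : 0 <= del*la*Vs*Ths) by (apply Rmult_le_pos; [apply Rmult_le_pos; [apply Rmult_le_pos|]|]; lra).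
 assert (Hw : 0 < x * r / z) by (apply Rdiv_lt_0_compat; [apply Rmult_lt_0_compat|]; auto).
 assert (Hlw : ln (x * r / z) = ln x + ln r - ln z) by (rewrite ln_div', ln_mult; auto; apply Rmult_lt_0_compat; auto).
 assert (I1 : 2 - 1/x - x*r/z <= - gfun (x*r/z) - ln r + ln z).
 { unfold gfun. rewrite Hlw. pose proof (ln_le_sub1 (1/x) ltac:(apply Rdiv_lt_0_compat; lra)).
   unfold Rdiv in H at 1. rewrite Rmult_1_l, ln_Rinv in H by auto. lra. }
 assert (I2 : 3 - y*r/z - x/y - 1/x <= - ln r + ln z).
 { assert (0 < y*r/z) by (apply Rdiv_lt_0_compat; [apply Rmult_lt_0_compat|]; auto).
   pose proof (ln_le_sub1 (y*r/z) H). pose proof (ln_le_sub1 (x/y) ltac:(apply Rdiv_lt_0_compat; lra)).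
   pose proof (ln_le_sub1 (1/x) ltac:(apply Rdiv_lt_0_compat; lra)).
   rewrite ln_div', ln_mult in H0 by (auto; apply Rmult_lt_0_compat; auto).
   rewrite ln_div' in H1 by auto. rewrite ln_div', ln_1 in H2 by (auto; lra). lra. }
 assert (I3 : 3 - y - x/y - 1/x <= - gfun y).
 { unfold gfun. pose proof (ln_le_sub1 (x/y) ltac:(apply Rdiv_lt_0_compat; lra)).
   pose proof (ln_le_sub1 (1/x) ltac:(apply Rdiv_lt_0_compat; lra)).
   rewrite ln_div' in H by auto. rewrite ln_div', ln_1 in H0 by (auto; lra). lra. }
 assert (I4 : 0 <= (om - gam)*Vs*(x-y)*(x-y)/(x*y)).
 { unfold Rdiv. apply Rmult_le_pos. rewrite Rmult_assoc. apply Rmult_le_pos. apply Rmult_le_pos; lra.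
   apply Rle_0_sqr. left; apply Rinv_0_lt_compat, Rmult_lt_0_compat; auto. }
 assert (HPR : la*Ss*Ths + del*la*Vs*Ths = (gam+bet+d)*Is) by lra.
 assert (J1 : la*Ss*Ths*(2 - 1/x - x*r/z) <= la*Ss*Ths*(- gfun (x*r/z) - ln r + ln z)) by (apply Rmult_le_compat_l; lra).
 assert (J2 : del*la*Vs*Ths*(3 - y*r/z - x/y - 1/x) <= del*la*Vs*Ths*(- ln r + ln z)) by (apply Rmult_le_compat_l; lra).
 assert (J3 : (d+gam)*Vs*(3 - y - x/y - 1/x) <= (d+gam)*Vs*(- gfun y)) by (apply Rmult_le_compat_l; [apply Rmult_le_pos|]; lra).
 assert (Hsum : (gam+bet+d)*Is*(r - z - ln r + ln z) = (la*Ss*Ths + del*la*Vs*Ths)*(r - z - ln r + ln z)) by (rewrite HPR; ring).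
 rewrite Hsum. lra.
Qed.

Lemma rc_plus f g : right_cont0 f -> right_cont0 g -> right_cont0 (fun t => f t + g t).
Proof. intros Hf Hg eps He. destruct (Hf (eps/2)) as [d1 [Hd1 H1]]; [lra|]. destruct (Hg (eps/2)) as [d2 [Hd2 H2]]; [lra|].
 exists (Rmin d1 d2). split. apply Rmin_glb_lt; lra. intros t Ht.
 assert (Rmin d1 d2 <= d1) by apply Rmin_l. assert (Rmin d1 d2 <= d2) by apply Rmin_r.
 specialize (H1 t ltac:(lra)). specialize (H2 t ltac:(lra)).
 replace (f t + g t - (f 0 + g 0)) with ((f t - f 0) + (g t - g 0)) by ring.
 eapply Rle_lt_trans; [apply Rabs_triang| lra]. Qed.

Lemma rc_scal c f : right_cont0 f -> right_cont0 (fun t => c * f t).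
Proof. intros Hf eps He. destruct (Hf (eps / (Rabs c + 1))) as [d1 [Hd1 H1]].
 apply Rdiv_lt_0_compat; [lra| pose proof (Rabs_pos c); lra].
 exists d1. split; auto. intros t Ht. specialize (H1 t Ht).
 replace (c * f t - c * f 0) with (c * (f t - f 0)) by ring. rewrite Rabs_mult.
 pose proof (Rabs_pos c).
 assert (Rabs c * Rabs (f t - f 0) <= Rabs c * (eps / (Rabs c + 1))) by (apply Rmult_le_compat_l; lra).
 assert (Rabs c * (eps / (Rabs c + 1)) < eps).
 { apply Rmult_lt_reg_r with (Rabs c + 1). lra.
   replace (Rabs c * (eps / (Rabs c + 1)) * (Rabs c + 1)) with (Rabs c * eps) by (field; lra). nra. }
 lra. Qed.

Lemma rc_const c : right_cont0 (fun _ => c).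
Proof. intros eps He. exists 1. split; [lra|]. intros. rewrite Rminus_diag, Rabs_R0; lra. Qed.

Lemma gronwall0 (W W' : R -> R) K T : 0 <= K ->
  (forall t, 0 < t -> derivable_pt_lim W t (W' t)) ->
  (forall t, 0 < t <= T -> W' t <= K * W t) ->
  (forall t, 0 <= t -> 0 <= W t) -> small0 W ->
  forall t, 0 < t <= T -> W t = 0.
Proof. intros HK Hd HW Hnn Hs t Ht.
 set (h := fun s => W s * exp (- (K * s))).
 assert (Hh : forall s, 0 < s -> derivable_pt_lim h s ((W' s - K * W s) * exp (- (K * s)))).
 { intros s Hs0. unfold h. replace ((W' s - K * W s) * exp (- (K * s))) with
     (W' s * exp (- (K * s)) + W s * (exp (- (K*s)) * (- K * 1))) by ring.
   apply (derivable_pt_lim_mult W (fun s => exp (- (K * s)))). auto.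
   apply (derivable_pt_lim_comp (fun s => - (K * s)) exp).
   replace (-K * 1) with (- (K * 1)) by ring. apply derivable_pt_lim_opp, derivable_pt_lim_scal, derivable_pt_lim_id.
   apply derivable_pt_lim_exp. }
 assert (Hle : forall s, 0 < s < t -> h t <= W s).
 { intros s Hs0. assert (h t <= h s).
   { apply (mvt_nonpos h (fun s => (W' s - K * W s) * exp (- (K * s)))). lra. intros; apply Hh; lra.
     intros c Hc. assert (W' c - K * W c <= 0) by (specialize (HW c ltac:(lra)); lra).
     pose proof (exp_pos (- (K * c))). nra. }
   unfold h in *. assert (exp (- (K * s)) <= 1) by (rewrite <- exp_0; apply exp_le_mono; nra).
   specialize (Hnn s ltac:(lra)). nra. }
 assert (h t <= 0).
 { apply Rnot_lt_le. intros Hlt. destruct (Hs (h t) ltac:(lra)) as [del [Hdel Hdel2]].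
   set (s := Rmin (del/2) (t/2)). assert (0 < s /\ s < del /\ s < t).
   { unfold s. repeat split. apply Rmin_glb_lt; lra. apply Rle_lt_trans with (del/2); [apply Rmin_l| lra].
     apply Rle_lt_trans with (t/2); [apply Rmin_r| lra]. }
   specialize (Hdel2 s ltac:(lra)). specialize (Hle s ltac:(lra)). lra. }
 unfold h in H. pose proof (exp_pos (- (K * t))). specialize (Hnn t ltac:(lra)).
 assert (W t * exp (- (K * t)) >= 0) by (apply Rle_ge, Rmult_le_pos; lra).
 assert (W t * exp (- (K * t)) = 0) by lra. apply Rmult_integral in H2. destruct H2; auto. lra. Qed.

Lemma small0_le g h : (forall t, 0 <= t -> g t <= h t) -> small0 h -> small0 g.
Proof. intros H Hh eps He. destruct (Hh eps He) as [del [Hd H2]]. exists del. split; auto. intros t Ht.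
 specialize (H2 t Ht). specialize (H t ltac:(lra)). lra. Qed.

Lemma small0_of_rc f : right_cont0 f -> small0 (fun t => (f t - f 0) * (f t - f 0)).
Proof. intros H eps He. apply rc_sqdiff; auto. Qed.

Lemma sumk_wsum_le n (a x : nat -> R) : (forall k, (1 <= k <= n)%nat -> 0 <= a k /\ 0 <= x k) ->
  sumk n (fun k => a k * x k) <= sumk n a * sumk n x.
Proof. intros H. rewrite <- sumk_scal. apply sumk_le. intros k Hk. destruct (H k Hk).
 apply Rmult_le_compat_r; auto. apply sumk_ge_term; auto. intros j Hj; apply H; auto. Qed.

Lemma Rabs_le_between a b : Rabs a <= b -> - b <= a <= b.
Proof. intros H. pose proof (Rle_abs a). pose proof (Rle_abs (- a)). rewrite Rabs_Ropp in H1. lra. Qed.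

Lemma prod_half a b : a * b <= (a * a + b * b) / 2.
Proof. pose proof (Rle_0_sqr (a - b)). unfold Rsqr in H. nra. Qed.

Lemma neg_mul_le s x y : s <= 0 -> y <= x -> s * x <= s * y.
Proof. intros. nra. Qed.

Lemma ThS_lb S Th B TB : Rabs S <= B -> Rabs Th <= TB -> TB * Rmin S 0 + B * Rmin Th 0 <= Th * S.
Proof. intros HS HT. apply Rabs_le_between in HS. apply Rabs_le_between in HT. unfold Rmin.
 destruct (Rle_dec S 0); destruct (Rle_dec Th 0).
 - assert (0 <= Th * S) by nra. assert (TB * S <= 0) by nra. assert (B * Th <= 0) by nra. lra.
 - assert (TB * S <= Th * S) by nra. assert (0 <= B) by lra. lra.
 - assert (B * Th <= Th * S) by nra. assert (0 <= TB) by lra. lra.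
 - assert (0 <= Th * S) by nra. assert (0 <= TB) by lra. assert (0 <= B) by lra. lra. Qed.

Lemma negpart_ineq (S V I Q Th L la mu ga et om de be d B TB : R) :
 0 < L -> 0 < la -> 0 < mu -> 0 < ga -> 0 < et -> 0 < om -> 0 <= de -> 0 < be -> 0 < d ->
 Rabs S <= B -> Rabs V <= B -> Rabs Th <= TB ->
 2*(Rmin S 0 * fS L la mu ga et om d Th S V I Q + Rmin V 0 * fV la mu de om d Th S V
    + Rmin I 0 * fI la de ga be d Th S V I + Rmin Q 0 * fQ be et d I Q)
 <= 8*(la*TB + de*la*TB + la*B + de*la*B + ga + et + om + mu + be) * (nm S + nm V + nm I + nm Q)
    + (la*B + de*la*B) * (Rmin Th 0 * Rmin Th 0).
Proof.
 intros HL Hla Hmu Hga Het Hom Hde Hbe Hd HS HV HT.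
 pose proof (Rabs_pos S). pose proof (Rabs_pos Th).
 assert (HB : 0 <= B) by lra. assert (HTB : 0 <= TB) by lra.
 pose proof (ThS_lb S Th B TB HS HT) as L1. pose proof (ThS_lb V Th B TB HV HT) as L2.
 apply Rabs_le_between in HT.
 set (s := Rmin S 0) in *. set (v := Rmin V 0) in *. set (i := Rmin I 0) in *. set (q := Rmin Q 0) in *. set (tm := Rmin Th 0) in *.
 assert (Hs : s <= 0 /\ s <= S) by (unfold s; split; [apply Rmin_r| apply Rmin_l]).
 assert (Hv : v <= 0 /\ v <= V) by (unfold v; split; [apply Rmin_r| apply Rmin_l]).
 assert (Hi : i <= 0 /\ i <= I) by (unfold i; split; [apply Rmin_r| apply Rmin_l]).
 assert (Hq : q <= 0 /\ q <= Q) by (unfold q; split; [apply Rmin_r| apply Rmin_l]).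
 assert (NS : s * S = nm S) by (unfold s; apply rmin_mul). assert (NV : v * V = nm V) by (unfold v; apply rmin_mul).
 assert (NI : i * I = nm I) by (unfold i; apply rmin_mul). assert (NQ : q * Q = nm Q) by (unfold q; apply rmin_mul).
 assert (SS : s * s = nm S) by reflexivity. assert (VV : v * v = nm V) by reflexivity.
 assert (II : i * i = nm I) by reflexivity. assert (QQ : q * q = nm Q) by reflexivity.
 pose proof (nm_nonneg S); pose proof (nm_nonneg V); pose proof (nm_nonneg I); pose proof (nm_nonneg Q).
 assert (A1 : s * L <= 0) by nra.
 assert (A2 : - (la * s * S * Th) <= la * TB * nm S).
 { replace (la * s * S * Th) with (la * nm S * Th) by (rewrite <- NS; ring).
   assert (0 <= la * nm S) by (apply Rmult_le_pos; lra). nra. }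
 assert (A3 : s * I <= s * i) by (apply neg_mul_le; lra).
 assert (A4 : s * Q <= s * q) by (apply neg_mul_le; lra).
 assert (A5 : s * V <= s * v) by (apply neg_mul_le; lra).
 pose proof (prod_half s i) as P1. pose proof (prod_half s q) as P2. pose proof (prod_half s v) as P3.
 assert (ES : s * fS L la mu ga et om d Th S V I Q =
    s * L - la * s * S * Th + ga * (s * I) + et * (s * Q) + om * (s * V) - (mu + d) * (s * S)) by (unfold fS; ring).
 assert (BS : 2 * (s * fS L la mu ga et om d Th S V I Q) <=
    2 * la * TB * nm S + ga * (nm S + nm I) + et * (nm S + nm Q) + om * (nm S + nm V)).
 { rewrite ES. rewrite NS. rewrite SS, II in P1. rewrite SS, QQ in P2. rewrite SS, VV in P3.
   assert (ga * (s * I) <= ga * (s * i)) by (apply Rmult_le_compat_l; lra).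
   assert (et * (s * Q) <= et * (s * q)) by (apply Rmult_le_compat_l; lra).
   assert (om * (s * V) <= om * (s * v)) by (apply Rmult_le_compat_l; lra).
   assert (ga * (s * i) <= ga * ((nm S + nm I)/2)) by (apply Rmult_le_compat_l; lra).
   assert (et * (s * q) <= et * ((nm S + nm Q)/2)) by (apply Rmult_le_compat_l; lra).
   assert (om * (s * v) <= om * ((nm S + nm V)/2)) by (apply Rmult_le_compat_l; lra).
   assert (0 <= (mu + d) * nm S) by (apply Rmult_le_pos; lra). lra. }
 assert (BV : 2 * (v * fV la mu de om d Th S V) <= mu * (nm V + nm S) + 2 * de * la * TB * nm V).
 { unfold fV. assert (v * S <= v * s) by (apply neg_mul_le; lra). pose proof (prod_half v s) as P4. rewrite VV, SS in P4.
   assert (mu * (v * S) <= mu * (v * s)) by (apply Rmult_le_compat_l; lra).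
   assert (mu * (v * s) <= mu * ((nm V + nm S)/2)) by (apply Rmult_le_compat_l; lra).
   replace (v * (mu * S - de * la * V * Th - (d + om) * V)) with (mu * (v * S) - de * la * (v * V) * Th - (d + om) * (v * V)) by ring.
   rewrite NV. assert (0 <= de * la * nm V) by (apply Rmult_le_pos; [apply Rmult_le_pos|]; lra).
   assert (- (de * la * nm V * Th) <= de * la * nm V * TB) by nra.
   assert (0 <= (d + om) * nm V) by (apply Rmult_le_pos; lra). lra. }
 assert (BI : 2 * (i * fI la de ga be d Th S V I) <=
    la * TB * (nm I + nm S) + la * B * (nm I + tm * tm) + de * la * TB * (nm I + nm V) + de * la * B * (nm I + tm * tm)).
 { unfold fI.
   assert (i * (Th * S) <= i * (TB * s + B * tm)) by (apply neg_mul_le; lra).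
   assert (i * (Th * V) <= i * (TB * v + B * tm)) by (apply neg_mul_le; lra).
   pose proof (prod_half i s) as Q1. pose proof (prod_half i v) as Q2. pose proof (prod_half i tm) as Q3.
   rewrite II, SS in Q1. rewrite II, VV in Q2. rewrite II in Q3.
   replace (i * (la * S * Th + de * la * V * Th - (ga + be + d) * I)) with
     (la * (i * (Th * S)) + de * la * (i * (Th * V)) - (ga + be + d) * (i * I)) by ring.
   rewrite NI.
   assert (la * (i * (Th * S)) <= la * (i * (TB * s + B * tm))) by (apply Rmult_le_compat_l; lra).
   assert (0 <= de * la) by (apply Rmult_le_pos; lra).
   assert (de * la * (i * (Th * V)) <= de * la * (i * (TB * v + B * tm))) by (apply Rmult_le_compat_l; lra).
   replace (i * (TB * s + B * tm)) with (TB * (i * s) + B * (i * tm)) in * by ring.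
   replace (i * (TB * v + B * tm)) with (TB * (i * v) + B * (i * tm)) in * by ring.
   assert (TB * (i * s) <= TB * ((nm I + nm S)/2)) by (apply Rmult_le_compat_l; lra).
   assert (TB * (i * v) <= TB * ((nm I + nm V)/2)) by (apply Rmult_le_compat_l; lra).
   assert (B * (i * tm) <= B * ((nm I + tm * tm)/2)) by (apply Rmult_le_compat_l; lra).
   assert (la * (TB * (i * s) + B * (i * tm)) <= la * (TB * ((nm I + nm S)/2) + B * ((nm I + tm * tm)/2))) by (apply Rmult_le_compat_l; lra).
   assert (de * la * (TB * (i * v) + B * (i * tm)) <= de * la * (TB * ((nm I + nm V)/2) + B * ((nm I + tm * tm)/2))) by (apply Rmult_le_compat_l; lra).
   assert (0 <= (ga + be + d) * nm I) by (apply Rmult_le_pos; lra). lra. }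
 assert (BQ : 2 * (q * fQ be et d I Q) <= be * (nm Q + nm I)).
 { unfold fQ. assert (q * I <= q * i) by (apply neg_mul_le; lra). pose proof (prod_half q i) as P5. rewrite QQ, II in P5.
   replace (q * (be * I - (et + d) * Q)) with (be * (q * I) - (et + d) * (q * Q)) by ring. rewrite NQ.
   assert (be * (q * I) <= be * (q * i)) by (apply Rmult_le_compat_l; lra).
   assert (be * (q * i) <= be * ((nm Q + nm I)/2)) by (apply Rmult_le_compat_l; lra).
   assert (0 <= (et + d) * nm Q) by (apply Rmult_le_pos; lra). lra. }
 assert (0 <= la * TB) by (apply Rmult_le_pos; lra). assert (0 <= de * la * TB) by (apply Rmult_le_pos; [apply Rmult_le_pos|]; lra).
 assert (0 <= la * B) by (apply Rmult_le_pos; lra). assert (0 <= de * la * B) by (apply Rmult_le_pos; [apply Rmult_le_pos|]; lra).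
 set (KK := la*TB + de*la*TB + la*B + de*la*B + ga + et + om + mu + be).
 assert (la * TB * nm S <= KK * nm S) by (apply Rmult_le_compat_r; unfold KK; lra).
 assert (la * TB * nm I <= KK * nm I) by (apply Rmult_le_compat_r; unfold KK; lra).
 assert (de * la * TB * nm V <= KK * nm V) by (apply Rmult_le_compat_r; unfold KK; lra).
 assert (de * la * TB * nm I <= KK * nm I) by (apply Rmult_le_compat_r; unfold KK; lra).
 assert (la * B * nm I <= KK * nm I) by (apply Rmult_le_compat_r; unfold KK; lra).
 assert (de * la * B * nm I <= KK * nm I) by (apply Rmult_le_compat_r; unfold KK; lra).
 assert (ga * nm S <= KK * nm S) by (apply Rmult_le_compat_r; unfold KK; lra).
 assert (ga * nm I <= KK * nm I) by (apply Rmult_le_compat_r; unfold KK; lra).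
 assert (et * nm S <= KK * nm S) by (apply Rmult_le_compat_r; unfold KK; lra).
 assert (et * nm Q <= KK * nm Q) by (apply Rmult_le_compat_r; unfold KK; lra).
 assert (om * nm S <= KK * nm S) by (apply Rmult_le_compat_r; unfold KK; lra).
 assert (om * nm V <= KK * nm V) by (apply Rmult_le_compat_r; unfold KK; lra).
 assert (mu * nm S <= KK * nm S) by (apply Rmult_le_compat_r; unfold KK; lra).
 assert (mu * nm V <= KK * nm V) by (apply Rmult_le_compat_r; unfold KK; lra).
 assert (be * nm Q <= KK * nm Q) by (apply Rmult_le_compat_r; unfold KK; lra).
 assert (be * nm I <= KK * nm I) by (apply Rmult_le_compat_r; unfold KK; lra).
 assert (la * TB * nm S <= KK * nm S) by (apply Rmult_le_compat_r; unfold KK; lra).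
 assert (de * la * TB * nm V <= KK * nm V) by (apply Rmult_le_compat_r; unfold KK; lra).
 assert (0 <= KK) by (unfold KK; lra).
 assert (0 <= KK * nm S) by (apply Rmult_le_pos; lra). assert (0 <= KK * nm V) by (apply Rmult_le_pos; lra).
 assert (0 <= KK * nm I) by (apply Rmult_le_pos; lra). assert (0 <= KK * nm Q) by (apply Rmult_le_pos; lra).
 assert (2 * (s * fS L la mu ga et om d Th S V I Q + v * fV la mu de om d Th S V + i * fI la de ga be d Th S V I + q * fQ be et d I Q)
   = 2 * (s * fS L la mu ga et om d Th S V I Q) + 2 * (v * fV la mu de om d Th S V) + 2 * (i * fI la de ga be d Th S V I) + 2 * (q * fQ be et d I Q)) by ring.
 rewrite H32. clear H32. clear ES NS NV NI NQ SS VV II QQ A1 A2 A3 A4 A5 P1 P2 P3 L1 L2.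
 generalize dependent (s * fS L la mu ga et om d Th S V I Q). generalize dependent (v * fV la mu de om d Th S V).
 generalize dependent (i * fI la de ga be d Th S V I). generalize dependent (q * fQ be et d I Q). intros.
 lra.
Qed.

Lemma dpl_eq f t l l' : derivable_pt_lim f t l -> l = l' -> derivable_pt_lim f t l'.
Proof. intros H E; subst; auto. Qed.

Lemma gfun_deriv u : 0 < u -> derivable_pt_lim gfun u (1 - / u).
Proof. intros Hu. unfold gfun.
 apply (derivable_pt_lim_minus (fun u => u - 1) ln). apply dpl_eq with (1 - 0).
 apply (derivable_pt_lim_minus id (fun _ => 1)). apply derivable_pt_lim_id. apply derivable_pt_lim_const. ring.
 apply derivable_pt_lim_ln; auto. Qed.

Lemma gfun_chain (f : R -> R) t l c : derivable_pt_lim f t l -> 0 < f t -> 0 < c ->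
  derivable_pt_lim (fun s => c * gfun (f s / c)) t ((1 - c / f t) * l).
Proof. intros H Hf Hc. apply dpl_eq with (c * ((1 - / (f t / c)) * (/ c * l))).
 apply derivable_pt_lim_scal. apply (derivable_pt_lim_comp (fun s => f s / c) gfun).
 apply dpl_eq with (l * / c). unfold Rdiv. apply (derivable_pt_lim_mult f (fun _ => / c)) || idtac.
 apply dpl_eq with (l * / c + f t * 0). apply (derivable_pt_lim_mult f (fun _ => / c)). auto. apply derivable_pt_lim_const. ring. ring.
 apply gfun_deriv. apply Rdiv_lt_0_compat; auto. field. lra. Qed.

Lemma jensen_cross n (w Is I : nat -> R) A B :
  (forall k, (1 <= k <= n)%nat -> 0 <= w k /\ 0 < Is k /\ 0 < I k) -> 0 < A -> 0 < B ->
  sumk n (fun k => w k * I k) = A -> sumk n (fun k => w k * Is k) = B ->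
  sumk n (fun k => w k * Is k * (A/B - I k/Is k - ln (A/B) + ln (I k / Is k))) <= 0.
Proof. intros Hw HA HB EA EB. set (r := A / B). assert (Hr : 0 < r) by (unfold r; apply Rdiv_lt_0_compat; auto).
 apply Rle_trans with (sumk n (fun k => (1 - / r) * (r * (w k * Is k) - w k * I k))).
 - apply sumk_le. intros k Hk. destruct (Hw k Hk) as [H1 [H2 H3]].
   assert (Hz : 0 < I k / Is k) by (apply Rdiv_lt_0_compat; auto).
   assert (ln (I k / Is k) - ln r <= (I k / Is k) / r - 1).
   { rewrite <- ln_div' by auto. apply ln_le_sub1. apply Rdiv_lt_0_compat; auto. }
   assert (0 <= w k * Is k) by nra.
   replace ((1 - / r) * (r * (w k * Is k) - w k * I k)) with (w k * Is k * ((r - I k / Is k) - (r - I k / Is k) / r)) by (field; lra).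
   apply Rmult_le_compat_l; auto. replace ((I k / Is k) / r) with (I k / Is k / r) in H by reflexivity.
   assert ((r - I k / Is k) / r = 1 - I k / Is k / r) by (field; lra). lra.
 - rewrite sumk_scal, sumk_minus, sumk_scal, EA, EB. unfold r. right. field. lra. Qed.

Lemma LB_div t0 f g m : 0 < m -> (forall t, t0 <= t -> m <= g t) -> LB t0 f -> LB t0 g -> LB t0 (fun t => f t / g t).
Proof. intros Hm Hg Hf HgL. apply (LB_mult t0 f (fun t => / g t)); auto. apply LB_inv with m; auto. Qed.

Lemma LB_gfun t0 f m : 0 < m -> (forall t, t0 <= t -> m <= f t) -> LB t0 f -> LB t0 (fun t => gfun (f t)).
Proof. intros Hm Hf HL. unfold gfun. apply (LB_minus t0 (fun t => f t - 1) (fun t => ln (f t))).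
 apply (LB_minus t0 f (fun _ => 1)); auto. apply LB_const. apply LB_ln with m; auto. Qed.

Lemma LB_sqs t0 f c : LB t0 f -> LB t0 (fun t => (f t - c) * (f t - c)).
Proof. intros H. apply (LB_mult t0 (fun t => f t - c) (fun t => f t - c)); apply (LB_minus t0 f (fun _ => c)); auto; apply LB_const. Qed.

Lemma gfun_lb u M : 0 < u -> gfun u <= M -> exp (- 1 - M) <= u.
Proof. intros Hu H. unfold gfun in H. rewrite <- (exp_ln u) by auto. apply exp_le_mono. lra. Qed.

Lemma lim_ratio f g u l1 l2 a b c e : lim_infty f l1 -> lim_infty g l2 -> lim_infty u 0 -> e * l1 <> 0 ->
  lim_infty (fun t => (a + b * f t + c * g t - u t) * / (e * f t)) ((a + b * l1 + c * l2) * / (e * l1)).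
Proof. intros Hf Hg Hu He.
 assert (HN := lim_minus _ _ _ _ (lim_plus _ _ _ _ (lim_plus _ _ _ _ (lim_const a) (lim_scal b _ _ Hf)) (lim_scal c _ _ Hg)) Hu).
 assert (HD := lim_inv _ _ He (lim_scal e _ _ Hf)).
 assert (HM := lim_mult _ _ _ _ HN HD).
 replace (a + b * l1 + c * l2) with (a + b * l1 + c * l2 - 0) by ring. exact HM. Qed.

Lemma lim_div3 f g w l1 l2 : l1 <> 0 -> l2 <> 0 -> lim_infty f l1 -> lim_infty g l2 -> lim_infty w 1 ->
  lim_infty (fun t => (f t / l1) * (g t / l2) / w t) 1.
Proof. intros H1 H2 Hf Hg Hw.
 assert (A := lim_scal (/ l1) _ _ Hf). assert (B := lim_scal (/ l2) _ _ Hg).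
 assert (C := lim_inv _ _ R1_neq_R0 Hw).
 assert (D := lim_mult _ _ _ _ (lim_mult _ _ _ _ A B) C).
 replace 1 with (/ l1 * l1 * (/ l2 * l2) * / 1) by (field; auto).
 eapply lim_ext_ev with (T0 := 0); [|exact D]. intros t _. simpl. unfold Rdiv. ring. Qed.


Lemma sumk_cont n (F : nat -> R -> R) x : (forall k, (1 <= k <= n)%nat -> continuity_pt (F k) x) ->
  continuity_pt (fun t => sumk n (fun k => F k t)) x.
Proof. induction n; intros H; simpl. apply continuity_pt_const. intros a b; auto.
 apply (continuity_pt_plus (fun t => sumk n (fun k => F k t)) (F (S n))). apply IHn; intros; apply H; lia. apply H; lia. Qed.

Lemma INR_pos_k k : (1 <= k)%nat -> 0 < INR k.
Proof. intros. apply lt_0_INR. lia. Qed.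

Section Equil.
Variables (n : nat) (p : nat -> R) (b d Phi : R) (lam phi mu : nat -> R) (beta gamma eta omega delta : R).
Hypothesis Hn : (1 <= n)%nat.
Hypothesis Hp : forall k, (1 <= k <= n)%nat -> p k > 0.
Hypothesis Hbd : b > d.
Hypothesis Hd : d > 0.
Hypothesis HPhi : Phi > 0.
Hypothesis Hlam : forall k, (1 <= k <= n)%nat -> lam k > 0.
Hypothesis Hphi : forall k, (1 <= k <= n)%nat -> phi k > 0.
Hypothesis Hmu : forall k, (1 <= k <= n)%nat -> mu k > 0.
Hypothesis Hbeta : beta > 0.
Hypothesis Hgamma : gamma > 0.
Hypothesis Homega : omega > 0.
Hypothesis Hdelta : 0 <= delta <= 1.
Hypothesis Hge : omega >= gamma.
Hypothesis Heq : gamma = eta.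

Definition kav := kavg n p.
Definition Ns k := Nstar b d Phi k.
Definition kap := gamma + beta + d.
Definition cc := (eta + beta + d) / (eta + d).
Definition ak k th := delta * lam k * th + d + omega.
Definition Dk k th := kap * (ak k th + mu k) + cc * lam k * th * (ak k th + delta * mu k).
Definition Se k th := Ns k * ak k th * kap / Dk k th.
Definition Ve k th := Ns k * mu k * kap / Dk k th.
Definition Ie k th := lam k * th * Ns k * (ak k th + delta * mu k) / Dk k th.
Definition Qe k th := beta * Ie k th / (eta + d).
Definition Gterm k th := phi k * p k * (lam k * Ns k * (ak k th + delta * mu k) / Dk k th).
Definition Gf th := / kav * sumk n (fun k => Gterm k th).

Lemma kav_pos : 0 < kav.
Proof. unfold kav, kavg. apply sumk_pos; auto. intros k Hk. apply Rmult_lt_0_compat. apply INR_pos_k; lia. apply Hp; auto. Qed.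

Lemma Ns_pos k : (1 <= k)%nat -> 0 < Ns k /\ Ns k < 1.
Proof. intros Hk. unfold Ns, Nstar. assert (0 < b * INR k * Phi) by (apply Rmult_lt_0_compat; [apply Rmult_lt_0_compat|]; try lra; apply INR_pos_k; auto).
 split. apply Rdiv_lt_0_compat; lra. apply Rmult_lt_reg_r with (d + b * INR k * Phi). lra.
 unfold Rdiv. rewrite Rmult_assoc, Rinv_l by lra. lra. Qed.

Lemma Lam_eq k : (1 <= k)%nat -> Lam b d Phi k = d * Ns k.
Proof. intros Hk. unfold Lam, Ns, Nstar. assert (0 < b * INR k * Phi) by (apply Rmult_lt_0_compat; [apply Rmult_lt_0_compat|]; try lra; apply INR_pos_k; auto).
 field. lra. Qed.

Lemma cc_eq : cc = kap / (gamma + d).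
Proof. unfold cc, kap. rewrite Heq. reflexivity. Qed.

Lemma cc_pos : 0 < cc.
Proof. rewrite cc_eq. unfold kap. apply Rdiv_lt_0_compat; lra. Qed.

Lemma ak_pos k th : (1 <= k <= n)%nat -> 0 <= th -> d + omega <= ak k th.
Proof. intros Hk Hth. unfold ak. assert (0 <= delta * lam k * th) by (apply Rmult_le_pos; [apply Rmult_le_pos|]; try lra; left; apply Hlam; auto). lra. Qed.

Lemma Dk_pos k th : (1 <= k <= n)%nat -> 0 <= th -> 0 < Dk k th.
Proof. intros Hk Hth. unfold Dk. pose proof (ak_pos k th Hk Hth). pose proof cc_pos. specialize (Hmu k Hk). specialize (Hlam k Hk).
 assert (0 < kap * (ak k th + mu k)) by (unfold kap; apply Rmult_lt_0_compat; lra).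
 assert (0 <= cc * lam k * th * (ak k th + delta * mu k)).
 { apply Rmult_le_pos. apply Rmult_le_pos. apply Rmult_le_pos; lra. lra. assert (0 <= delta * mu k) by (apply Rmult_le_pos; lra). lra. }
 lra. Qed.

Lemma Gterm_pos k th : (1 <= k <= n)%nat -> 0 <= th -> 0 < Gterm k th.
Proof. intros Hk Hth. unfold Gterm. pose proof (ak_pos k th Hk Hth). pose proof (Dk_pos k th Hk Hth).
 pose proof (Ns_pos k ltac:(lia)). specialize (Hmu k Hk). specialize (Hlam k Hk). specialize (Hphi k Hk). specialize (Hp k Hk).
 assert (0 <= delta * mu k) by (apply Rmult_le_pos; lra).
 apply Rmult_lt_0_compat. apply Rmult_lt_0_compat; lra. apply Rdiv_lt_0_compat; auto.
 apply Rmult_lt_0_compat. apply Rmult_lt_0_compat; lra. lra. Qed.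

Lemma key_ineq k th1 th2 : (1 <= k <= n)%nat -> 0 <= th1 -> th1 < th2 ->
  mu k * (1 - delta) * delta * (gamma + d) < (ak k th1 + delta * mu k) * (ak k th2 + delta * mu k).
Proof. intros Hk H1 H2. pose proof (ak_pos k th1 Hk H1). pose proof (ak_pos k th2 Hk ltac:(lra)).
 specialize (Hmu k Hk). assert (0 <= delta * mu k) by (apply Rmult_le_pos; lra).
 assert (d + gamma <= ak k th1 + delta * mu k) by lra. assert (d + gamma <= ak k th2 + delta * mu k) by lra.
 assert ((d + gamma + delta * mu k) * (d + gamma + delta * mu k) <= (ak k th1 + delta * mu k) * (ak k th2 + delta * mu k))
   by (apply Rmult_le_compat; lra).
 assert (mu k * (1 - delta) * delta * (gamma + d) <= delta * mu k * (gamma + d)).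
 { assert (0 <= delta * mu k * (gamma + d)) by (apply Rmult_le_pos; lra).
   replace (mu k * (1 - delta) * delta * (gamma + d)) with ((1 - delta) * (delta * mu k * (gamma + d))) by ring.
   assert (0 <= 1 - delta) by lra. nra. }
 assert (0 < (d + gamma) * (d + gamma)) by nra. nra. Qed.

Lemma Gterm_decr k th1 th2 : (1 <= k <= n)%nat -> 0 <= th1 -> th1 < th2 -> Gterm k th2 < Gterm k th1.
Proof. intros Hk H1 H2. unfold Gterm.
 pose proof (Dk_pos k th1 Hk H1) as D1. pose proof (Dk_pos k th2 Hk ltac:(lra)) as D2.
 pose proof (key_ineq k th1 th2 Hk H1 H2) as KI.
 pose proof (Ns_pos k ltac:(lia)). specialize (Hmu k Hk) as Hm. specialize (Hlam k Hk) as Hl. specialize (Hphi k Hk) as Hph. specialize (Hp k Hk) as Hpk.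
 pose proof (ak_pos k th1 Hk H1). pose proof (ak_pos k th2 Hk ltac:(lra)).
 assert (0 <= delta * mu k) by (apply Rmult_le_pos; lra).
 apply Rmult_lt_compat_l. apply Rmult_lt_0_compat; lra.
 assert (0 < lam k * Ns k) by (apply Rmult_lt_0_compat; lra).
 apply Rmult_lt_reg_r with (Dk k th1 * Dk k th2). apply Rmult_lt_0_compat; auto.
 replace (lam k * Ns k * (ak k th2 + delta * mu k) / Dk k th2 * (Dk k th1 * Dk k th2)) with (lam k * Ns k * ((ak k th2 + delta * mu k) * Dk k th1)) by (field; lra).
 replace (lam k * Ns k * (ak k th1 + delta * mu k) / Dk k th1 * (Dk k th1 * Dk k th2)) with (lam k * Ns k * ((ak k th1 + delta * mu k) * Dk k th2)) by (field; lra).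
 apply Rmult_lt_compat_l. lra.
 assert (Hd1 : (ak k th1 + delta * mu k) * Dk k th2 - (ak k th2 + delta * mu k) * Dk k th1 =
   (th2 - th1) * lam k * (cc * (ak k th1 + delta * mu k) * (ak k th2 + delta * mu k) - kap * mu k * (1 - delta) * delta)).
 { unfold Dk, ak. ring. }
 rewrite cc_eq in Hd1.
 assert (0 < kap / (gamma + d) * (ak k th1 + delta * mu k) * (ak k th2 + delta * mu k) - kap * mu k * (1 - delta) * delta).
 { assert (0 < kap) by (unfold kap; lra).
   replace (kap / (gamma + d) * (ak k th1 + delta * mu k) * (ak k th2 + delta * mu k) - kap * mu k * (1 - delta) * delta)
     with (kap / (gamma + d) * ((ak k th1 + delta * mu k) * (ak k th2 + delta * mu k) - mu k * (1 - delta) * delta * (gamma + d))) by (field; lra).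
   apply Rmult_lt_0_compat. apply Rdiv_lt_0_compat; lra. lra. }
 assert (0 < (th2 - th1) * lam k) by (apply Rmult_lt_0_compat; lra).
 assert (0 < (th2 - th1) * lam k * (kap / (gamma + d) * (ak k th1 + delta * mu k) * (ak k th2 + delta * mu k) - kap * mu k * (1 - delta) * delta)) by (apply Rmult_lt_0_compat; auto).
 lra. Qed.

Lemma Gf_decr th1 th2 : 0 <= th1 -> th1 < th2 -> Gf th2 < Gf th1.
Proof. intros H1 H2. unfold Gf. apply Rmult_lt_compat_l. apply Rinv_0_lt_compat, kav_pos.
 apply sumk_lt; auto. intros k Hk. apply Gterm_decr; auto. Qed.

Lemma Gf_0 : Gf 0 = Rnought n p b d Phi lam phi mu beta gamma omega delta.
Proof. unfold Gf, Rnought. f_equal. apply sumk_ext. intros k Hk. unfold Gterm, Dk, ak, kap. rewrite Lam_eq by lia.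
 specialize (Hmu k Hk). field. split; [lra|]. split; [|lra]. assert (0 <= delta * mu k) by (apply Rmult_le_pos; lra). lra. Qed.

Lemma Gterm_bound k th : (1 <= k <= n)%nat -> 0 < th -> Gterm k th <= phi k * p k * Ns k / (cc * th).
Proof. intros Hk Hth. unfold Gterm. pose proof (Dk_pos k th Hk ltac:(lra)). pose proof cc_pos.
 pose proof (Ns_pos k ltac:(lia)). specialize (Hmu k Hk) as Hm. specialize (Hlam k Hk) as Hl. specialize (Hphi k Hk) as Hph. specialize (Hp k Hk) as Hpk.
 pose proof (ak_pos k th Hk ltac:(lra)). assert (0 <= delta * mu k) by (apply Rmult_le_pos; lra).
 unfold Rdiv. rewrite !Rmult_assoc. apply Rmult_le_compat_l. lra. apply Rmult_le_compat_l. lra.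
 rewrite <- !Rmult_assoc. rewrite (Rmult_comm (lam k) (Ns k)). rewrite !Rmult_assoc. apply Rmult_le_compat_l. lra.
 set (A := ak k th + delta * mu k). assert (0 < A) by (unfold A; lra).
 assert (cc * lam k * th * A <= Dk k th).
 { unfold Dk. fold A. assert (0 < kap * (ak k th + mu k)) by (unfold kap; apply Rmult_lt_0_compat; lra). lra. }
 apply Rmult_le_reg_r with (Dk k th * (cc * th)). apply Rmult_lt_0_compat; [lra| apply Rmult_lt_0_compat; lra].
 replace (lam k * (A * / Dk k th) * (Dk k th * (cc * th))) with (cc * lam k * th * A) by (field; lra).
 replace (/ (cc * th) * (Dk k th * (cc * th))) with (Dk k th) by (field; lra). lra. Qed.

Lemma exists_root : Rnought n p b d Phi lam phi mu beta gamma omega delta > 1 ->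
  exists ths, 0 < ths /\ Gf ths = 1.
Proof. intros HR.
 set (C1 := / kav * sumk n (fun k => phi k * p k * Ns k / cc)).
 assert (HC1 : 0 < C1).
 { unfold C1. apply Rmult_lt_0_compat. apply Rinv_0_lt_compat, kav_pos. apply sumk_pos; auto. intros k Hk.
   pose proof (Ns_pos k ltac:(lia)). pose proof cc_pos. specialize (Hphi k Hk). specialize (Hp k Hk).
   apply Rdiv_lt_0_compat; auto. apply Rmult_lt_0_compat; [apply Rmult_lt_0_compat|]; lra. }
 set (X := 2 * C1 + 1).
 assert (HX : Gf X < 1).
 { unfold Gf. assert (sumk n (fun k => Gterm k X) <= sumk n (fun k => phi k * p k * Ns k / cc) / X).
   { unfold Rdiv. rewrite Rmult_comm, <- sumk_scal. apply sumk_le. intros k Hk. eapply Rle_trans. apply Gterm_bound; auto. unfold X; lra.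
     right. pose proof cc_pos. field. split; unfold X; lra. }
   assert (/ kav * sumk n (fun k => Gterm k X) <= C1 / X).
   { unfold C1. unfold Rdiv in *. rewrite Rmult_assoc. apply Rmult_le_compat_l. left; apply Rinv_0_lt_compat, kav_pos. auto. }
   assert (C1 / X < 1). { apply Rmult_lt_reg_r with X. unfold X; lra. unfold Rdiv. rewrite Rmult_assoc, Rinv_l by (unfold X; lra). unfold X; lra. }
   lra. }
 destruct (Ranalysis5.IVT_interv (fun th => 1 - Gf th) 0 X) as [z [Hz1 Hz2]].
 - intros a Ha. unfold Gf. apply continuity_pt_minus. apply continuity_pt_const; intros u v; auto.
   apply continuity_pt_scal. apply sumk_cont. intros k Hk. unfold Gterm. pose proof (Dk_pos k a Hk ltac:(lra)).
   unfold Dk, ak in *. reg. lra.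
 - unfold X; lra.
 - rewrite Gf_0. lra.
 - lra.
 - exists z. split; [|lra]. destruct Hz1 as [Hz1 _]. destruct (Rle_lt_or_eq_dec 0 z Hz1); auto. subst. rewrite Gf_0 in Hz2. lra. Qed.


Lemma Theta_Ie th : 0 < th -> Theta n p phi (fun k => Ie k th) = th * Gf th.
Proof. intros Hth. unfold Theta, Gf.
 replace (th * (/kav * sumk n (fun k => Gterm k th))) with (/kav * (th * sumk n (fun k => Gterm k th))) by ring.
 unfold kav. f_equal. rewrite <- sumk_scal. apply sumk_ext. intros k Hk. unfold Gterm, Ie.
 pose proof (Dk_pos k th Hk ltac:(lra)). field. lra. Qed.

Lemma eq_pos k th : (1 <= k <= n)%nat -> 0 < th ->
  0 < Se k th /\ 0 < Ve k th /\ 0 < Ie k th /\ 0 < Qe k th.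
Proof. intros Hk Hth. pose proof (Dk_pos k th Hk ltac:(lra)). pose proof (ak_pos k th Hk ltac:(lra)).
 pose proof (Ns_pos k ltac:(lia)). specialize (Hmu k Hk) as Hm. specialize (Hlam k Hk) as Hl.
 assert (0 <= delta * mu k) by (apply Rmult_le_pos; lra). assert (0 < kap) by (unfold kap; lra).
 assert (0 < Ie k th). { unfold Ie. apply Rdiv_lt_0_compat; auto. apply Rmult_lt_0_compat; [|lra].
   apply Rmult_lt_0_compat; [apply Rmult_lt_0_compat|]; lra. }
 unfold Se, Ve, Qe. repeat split; auto.
 apply Rdiv_lt_0_compat; auto. apply Rmult_lt_0_compat; [apply Rmult_lt_0_compat|]; lra.
 apply Rdiv_lt_0_compat; auto. apply Rmult_lt_0_compat; [apply Rmult_lt_0_compat|]; lra.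
 apply Rdiv_lt_0_compat; [apply Rmult_lt_0_compat|]; lra. Qed.

Lemma eq_sum k th : (1 <= k <= n)%nat -> 0 < th -> Se k th + Ve k th + Ie k th + Qe k th = Ns k.
Proof. intros Hk Hth. pose proof (Dk_pos k th Hk ltac:(lra)).
 assert (0 < eta + d) by lra.
 assert (HD2 : (eta + d) * Dk k th = kap * (ak k th + mu k) * (eta + d) + (eta + beta + d) * lam k * th * (ak k th + delta * mu k)) by (unfold Dk, cc; field; lra).
 assert (0 < (eta + d) * Dk k th) by (apply Rmult_lt_0_compat; lra).
 unfold Qe, Se, Ve, Ie. unfold Dk, cc in *. field. split; lra. Qed.

Lemma eq_eqs k th : (1 <= k <= n)%nat -> 0 < th ->
  fS (Lam b d Phi k) (lam k) (mu k) gamma eta omega d th (Se k th) (Ve k th) (Ie k th) (Qe k th) = 0 /\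
  fV (lam k) (mu k) delta omega d th (Se k th) (Ve k th) = 0 /\
  fI (lam k) delta gamma beta d th (Se k th) (Ve k th) (Ie k th) = 0 /\
  fQ beta eta d (Ie k th) (Qe k th) = 0.
Proof. intros Hk Hth. pose proof (Dk_pos k th Hk ltac:(lra)). pose proof (eq_sum k th Hk Hth) as Hs.
 assert (HV : fV (lam k) (mu k) delta omega d th (Se k th) (Ve k th) = 0).
 { unfold fV, Se, Ve, ak. field. lra. }
 assert (HI : fI (lam k) delta gamma beta d th (Se k th) (Ve k th) (Ie k th) = 0).
 { unfold fI, Se, Ve, Ie, ak, kap. field. lra. }
 assert (HQ : fQ beta eta d (Ie k th) (Qe k th) = 0).
 { unfold fQ, Qe. field. lra. }
 repeat split; auto.
 rewrite Lam_eq by lia. unfold fS, fV, fI, fQ in *.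
 assert (HS: d * Ns k = d * (Se k th + Ve k th + Ie k th + Qe k th)) by (rewrite Hs; ring). lra. Qed.

Lemma eq_unique_k k th S V I Q : (1 <= k <= n)%nat -> 0 < th ->
  fS (Lam b d Phi k) (lam k) (mu k) gamma eta omega d th S V I Q = 0 ->
  fV (lam k) (mu k) delta omega d th S V = 0 ->
  fI (lam k) delta gamma beta d th S V I = 0 ->
  fQ beta eta d I Q = 0 ->
  S = Se k th /\ V = Ve k th /\ I = Ie k th /\ Q = Qe k th.
Proof. intros Hk Hth E1 E2 E3 E4. pose proof (Dk_pos k th Hk ltac:(lra)). pose proof (ak_pos k th Hk ltac:(lra)).
 rewrite Lam_eq in E1 by lia. unfold fS, fV, fI, fQ in *.
 assert (HQ : Q = beta * I / (eta + d)). { apply Rmult_eq_reg_r with (eta + d); [|lra]. field_simplify; lra. }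
 assert (HV : V = mu k * S / ak k th). { apply Rmult_eq_reg_r with (ak k th); [|lra]. unfold ak in *. field_simplify; lra. }
 assert (HI : I = lam k * th * (S + delta * V) / kap). { apply Rmult_eq_reg_r with kap; [|unfold kap; lra]. unfold kap. field_simplify; lra. }
 assert (HN : S + V + I + Q = Ns k). { apply Rmult_eq_reg_l with d; [|lra]. lra. }
 assert (HS : S = Se k th).
 { unfold Se. apply Rmult_eq_reg_r with (Dk k th); [|lra].
   replace (Ns k * ak k th * kap / Dk k th * Dk k th) with (Ns k * ak k th * kap) by (field; lra).
   rewrite <- HN. rewrite HQ, HI, HV. unfold Dk, cc. field. unfold kap; repeat split; lra. }
 assert (HV' : V = Ve k th). { rewrite HV, HS. unfold Se, Ve. field. lra. }
 assert (HI' : I = Ie k th). { rewrite HI, HV', HS. unfold Se, Ve, Ie, ak, kap. field. unfold kap in *; lra. }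
 repeat split; auto. rewrite HQ, HI'. reflexivity. Qed.

Lemma endemic_ok ths : 0 < ths -> Gf ths = 1 ->
  endemic_eq n p b d Phi lam phi mu beta gamma eta omega delta
    (fun k => Se k ths) (fun k => Ve k ths) (fun k => Ie k ths) (fun k => Qe k ths).
Proof. intros Hth HG. assert (HT : Theta n p phi (fun k => Ie k ths) = ths) by (rewrite Theta_Ie, HG; lra).
 split; [|split].
 - intros k Hk. destruct (eq_pos k ths Hk Hth) as [A [B [C D]]]. lra.
 - rewrite HT; lra.
 - intros k Hk. simpl. rewrite HT. apply eq_eqs; auto. Qed.

Lemma endemic_unique ths : 0 < ths -> Gf ths = 1 ->
  forall Ss' Vs' Is' Qs', endemic_eq n p b d Phi lam phi mu beta gamma eta omega delta Ss' Vs' Is' Qs' ->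
  forall k, (1 <= k <= n)%nat -> Ss' k = Se k ths /\ Vs' k = Ve k ths /\ Is' k = Ie k ths /\ Qs' k = Qe k ths.
Proof. intros Hth HG Ss' Vs' Is' Qs' [Hnn [Hpos Heqs]].
 set (th' := Theta n p phi Is') in *.
 assert (Hu : forall k, (1 <= k <= n)%nat -> Ss' k = Se k th' /\ Vs' k = Ve k th' /\ Is' k = Ie k th' /\ Qs' k = Qe k th').
 { intros k Hk. destruct (Heqs k Hk) as [A [B [C D]]]. apply eq_unique_k; auto; lra. }
 assert (HT : th' = th' * Gf th').
 { rewrite <- Theta_Ie by lra. unfold th' at 1, Theta. f_equal. apply sumk_ext. intros k Hk. destruct (Hu k Hk) as [_ [_ [Hi _]]]. rewrite Hi; auto. }
 assert (HG' : Gf th' = 1). { apply Rmult_eq_reg_l with th'. lra. lra. }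
 assert (th' = ths). { destruct (Rtotal_order th' ths) as [Hl|[He|Hg]]; auto.
   pose proof (Gf_decr th' ths ltac:(lra) Hl); lra. pose proof (Gf_decr ths th' ltac:(lra) Hg); lra. }
 intros k Hk. rewrite <- H. apply Hu; auto. Qed.


Section Dyn.
Variables (S V I Q : nat -> R -> R).
Hypothesis Hsol : is_solution n p b d Phi lam phi mu beta gamma eta omega delta S V I Q.
Hypothesis Hinit : forall k, (1 <= k <= n)%nat ->
  0 <= S k 0 /\ 0 <= V k 0 /\ 0 <= I k 0 /\ 0 <= Q k 0 /\ S k 0 + V k 0 + I k 0 + Q k 0 = Nstar b d Phi k.
Hypothesis HI0 : sumk n (fun k => p k * I k 0) > 0.

Definition Th t := Theta n p phi (fun i => I i t).
Definition dS k t := fS (Lam b d Phi k) (lam k) (mu k) gamma eta omega d (Th t) (S k t) (V k t) (I k t) (Q k t).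
Definition dV k t := fV (lam k) (mu k) delta omega d (Th t) (S k t) (V k t).
Definition dI k t := fI (lam k) delta gamma beta d (Th t) (S k t) (V k t) (I k t).
Definition dQ k t := fQ beta eta d (I k t) (Q k t).

Lemma ders k t : (1 <= k <= n)%nat -> 0 < t ->
  derivable_pt_lim (S k) t (dS k t) /\ derivable_pt_lim (V k) t (dV k t) /\
  derivable_pt_lim (I k) t (dI k t) /\ derivable_pt_lim (Q k) t (dQ k t).
Proof. intros Hk Ht. destruct (Hsol k Hk) as [H _]. exact (H t Ht). Qed.

Lemma rcs k : (1 <= k <= n)%nat -> right_cont0 (S k) /\ right_cont0 (V k) /\ right_cont0 (I k) /\ right_cont0 (Q k).
Proof. intros Hk. destruct (Hsol k Hk) as [_ H]. exact H. Qed.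

Lemma conservation k t : (1 <= k <= n)%nat -> 0 <= t -> S k t + V k t + I k t + Q k t = Ns k.
Proof. intros Hk Ht. destruct (Hinit k Hk) as [_ [_ [_ [_ H0]]]].
 destruct (Rle_lt_or_eq_dec 0 t Ht) as [Htp|Ht0]; [|subst; exact H0].
 set (e := fun s => S k s + V k s + I k s + Q k s - Ns k).
 set (e' := fun s => dS k s + dV k s + dI k s + dQ k s).
 assert (Hde : forall s, 0 < s -> derivable_pt_lim e s (e' s)).
 { intros s Hs. destruct (ders k s Hk Hs) as [A [B [C D]]]. unfold e, e'.
   replace (dS k s + dV k s + dI k s + dQ k s) with (dS k s + dV k s + dI k s + dQ k s - 0) by ring.
   apply derivable_pt_lim_minus; [|apply derivable_pt_lim_const].
   apply derivable_pt_lim_plus; [apply derivable_pt_lim_plus; [apply derivable_pt_lim_plus|]|]; auto. }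
 assert (He' : forall s, 0 < s -> e' s + d * e s = 0).
 { intros s Hs. unfold e, e', dS, dV, dI, dQ, fS, fV, fI, fQ. rewrite Lam_eq by lia. ring. }
 assert (Hrc : right_cont0 e).
 { destruct (rcs k Hk) as [A [B [C D]]]. unfold e. apply (rc_plus _ (fun _ => - Ns k)); [|apply rc_const].
   apply (rc_plus (fun s => S k s + V k s + I k s) (Q k)); auto. apply (rc_plus (fun s => S k s + V k s) (I k)); auto.
   apply (rc_plus (S k) (V k)); auto. }
 assert (He0 : e 0 = 0) by (unfold e; unfold Ns; lra).
 assert (L1 := expo_lb e e' d ltac:(lra) Hde ltac:(intros s hs; specialize (He' s hs); lra) Hrc ltac:(lra) t Htp).
 assert (Hde2 : forall s, 0 < s -> derivable_pt_lim (fun s => -1 * e s) s (-1 * e' s)) by (intros; apply derivable_pt_lim_scal; auto).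
 assert (L2 := expo_lb (fun s => -1 * e s) (fun s => -1 * e' s) d ltac:(lra) Hde2
   ltac:(intros s hs; specialize (He' s hs); lra) (rc_scal (-1) e Hrc) ltac:(lra) t Htp).
 simpl in L2. rewrite He0 in L1, L2. assert (e t = 0) by lra. unfold e in H. lra.
Qed.

Lemma nm_chain (f : R -> R) t l : derivable_pt_lim f t l -> derivable_pt_lim (fun s => nm (f s)) t (2 * Rmin (f t) 0 * l).
Proof. intros H. apply (derivable_pt_lim_comp f nm). auto. apply nm_deriv. Qed.

Lemma bounds_0T T : exists B, forall k, (1 <= k <= n)%nat -> forall s, 0 <= s <= T ->
  Rabs (S k s) <= B /\ Rabs (V k s) <= B /\ Rabs (I k s) <= B /\ Rabs (Q k s) <= B.
Proof. apply (bnd_family n (fun k B => forall s, 0 <= s <= T -> Rabs (S k s) <= B /\ Rabs (V k s) <= B /\ Rabs (I k s) <= B /\ Rabs (Q k s) <= B)).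
 - intros k B B' HB H s Hs. specialize (H s Hs). lra.
 - intros k Hk. destruct (rcs k Hk) as [R1 [R2 [R3 R4]]].
   destruct (bnd_0T (S k) (dS k) R1 (fun t ht => proj1 (ders k t Hk ht)) T) as [B1 H1].
   destruct (bnd_0T (V k) (dV k) R2 (fun t ht => proj1 (proj2 (ders k t Hk ht))) T) as [B2 H2].
   destruct (bnd_0T (I k) (dI k) R3 (fun t ht => proj1 (proj2 (proj2 (ders k t Hk ht)))) T) as [B3 H3].
   destruct (bnd_0T (Q k) (dQ k) R4 (fun t ht => proj2 (proj2 (proj2 (ders k t Hk ht)))) T) as [B4 H4].
   exists (Rmax (Rmax B1 B2) (Rmax B3 B4)). intros s Hs.
   specialize (H1 s Hs); specialize (H2 s Hs); specialize (H3 s Hs); specialize (H4 s Hs).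
   pose proof (Rmax_l (Rmax B1 B2) (Rmax B3 B4)). pose proof (Rmax_r (Rmax B1 B2) (Rmax B3 B4)).
   pose proof (Rmax_l B1 B2). pose proof (Rmax_r B1 B2). pose proof (Rmax_l B3 B4). pose proof (Rmax_r B3 B4).
   repeat split; lra. Qed.

Definition Wf s := sumk n (fun k => nm (S k s) + nm (V k s) + nm (I k s) + nm (Q k s)).
Definition Wd s := sumk n (fun k => 2 * (Rmin (S k s) 0 * dS k s + Rmin (V k s) 0 * dV k s + Rmin (I k s) 0 * dI k s + Rmin (Q k s) 0 * dQ k s)).

Lemma Wf_deriv s : 0 < s -> derivable_pt_lim Wf s (Wd s).
Proof. intros Hs. unfold Wf, Wd.
 replace (sumk n (fun k => 2 * (Rmin (S k s) 0 * dS k s + Rmin (V k s) 0 * dV k s + Rmin (I k s) 0 * dI k s + Rmin (Q k s) 0 * dQ k s)))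
   with (sumk n (fun k => 2 * Rmin (S k s) 0 * dS k s + 2 * Rmin (V k s) 0 * dV k s + 2 * Rmin (I k s) 0 * dI k s + 2 * Rmin (Q k s) 0 * dQ k s))
   by (apply sumk_ext; intros; ring).
 apply (sumk_deriv n (fun k s => nm (S k s) + nm (V k s) + nm (I k s) + nm (Q k s))).
 intros k Hk. destruct (ders k s Hk Hs) as [A [B [C D]]].
 apply derivable_pt_lim_plus; [apply derivable_pt_lim_plus; [apply derivable_pt_lim_plus|]|]; apply nm_chain; auto. Qed.

Lemma Wf_nonneg s : 0 <= Wf s.
Proof. unfold Wf. apply sumk_nonneg. intros k Hk. pose proof (nm_nonneg (S k s)); pose proof (nm_nonneg (V k s));
 pose proof (nm_nonneg (I k s)); pose proof (nm_nonneg (Q k s)); lra. Qed.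

Lemma Wf_small : small0 Wf.
Proof. apply small0_le with (fun s => sumk n (fun k => (S k s - S k 0) * (S k s - S k 0) + (V k s - V k 0) * (V k s - V k 0)
   + (I k s - I k 0) * (I k s - I k 0) + (Q k s - Q k 0) * (Q k s - Q k 0))).
 - intros s Hs. unfold Wf. apply sumk_le. intros k Hk. destruct (Hinit k Hk) as [A [B [C [D _]]]].
   pose proof (nm_le_sq (S k s) (S k 0) A). pose proof (nm_le_sq (V k s) (V k 0) B).
   pose proof (nm_le_sq (I k s) (I k 0) C). pose proof (nm_le_sq (Q k s) (Q k 0) D). lra.
 - apply (small0_sumk n (fun k s => (S k s - S k 0) * (S k s - S k 0) + (V k s - V k 0) * (V k s - V k 0)
   + (I k s - I k 0) * (I k s - I k 0) + (Q k s - Q k 0) * (Q k s - Q k 0))).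
   intros k Hk. destruct (rcs k Hk) as [R1 [R2 [R3 R4]]].
   apply small0_plus; [apply small0_plus; [apply small0_plus|]|]; apply small0_of_rc; auto. Qed.

Lemma Th_abs s B : (forall k, (1 <= k <= n)%nat -> Rabs (I k s) <= B) ->
  Rabs (Th s) <= / kav * sumk n (fun j => phi j * p j * B).
Proof. intros HB. unfold Th, Theta. fold kav. assert (Hkav := kav_pos).
 rewrite Rabs_mult, Rabs_right by (apply Rle_ge; left; apply Rinv_0_lt_compat; lra).
 apply Rmult_le_compat_l. left; apply Rinv_0_lt_compat; lra.
 eapply Rle_trans. apply sumk_abs. apply sumk_le. intros k Hk. rewrite Rabs_mult.
 specialize (Hphi k Hk). specialize (Hp k Hk). rewrite Rabs_right by (apply Rle_ge; nra).
 apply Rmult_le_compat_l. nra. auto. Qed.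

Lemma tm_bound s : Rmin (Th s) 0 * Rmin (Th s) 0 <= (/ kav * sumk n (fun j => phi j * p j)) * (/ kav * sumk n (fun j => phi j * p j)) * Wf s.
Proof. set (Cw := / kav * sumk n (fun j => phi j * p j)). assert (Hkav := kav_pos).
 pose proof (Wf_nonneg s) as HW. set (r := sqrt (Wf s)).
 assert (Hr : 0 <= r) by apply sqrt_pos. assert (Hrr : r * r = Wf s) by (apply sqrt_sqrt; auto).
 assert (Hm : forall j, (1 <= j <= n)%nat -> - r <= Rmin (I j s) 0).
 { intros j Hj. assert (nm (I j s) <= Wf s).
   { unfold Wf. eapply Rle_trans; [|apply (sumk_ge_term n (fun k => nm (S k s) + nm (V k s) + nm (I k s) + nm (Q k s)) j)]; auto.
     pose proof (nm_nonneg (S j s)); pose proof (nm_nonneg (V j s)); pose proof (nm_nonneg (Q j s)); lra.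
     intros k Hk. pose proof (nm_nonneg (S k s)); pose proof (nm_nonneg (V k s)); pose proof (nm_nonneg (I k s)); pose proof (nm_nonneg (Q k s)); lra. }
   pose proof (rmin_nonpos (I j s)). unfold nm in H.
   assert (sqrt ((- Rmin (I j s) 0) * (- Rmin (I j s) 0)) <= r).
   { apply sqrt_le_1_alt. lra. }
   rewrite sqrt_square in H1 by lra. lra. }
 assert (HT : - (Cw * r) <= Th s).
 { assert (E : sumk n (fun k => phi k * p k * (- r)) = (-r) * sumk n (fun k => phi k * p k)) by (rewrite <- sumk_scal; apply sumk_ext; intros; ring).
   replace (-(Cw*r)) with (/kav * sumk n (fun k => phi k*p k*(-r))) by (rewrite E; unfold Cw; ring).
   unfold Th, Theta. fold kav. apply Rmult_le_compat_l. left; apply Rinv_0_lt_compat; lra.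
   apply sumk_le. intros k Hk. specialize (Hm k Hk). specialize (Hphi k Hk). specialize (Hp k Hk).
   pose proof (rmin_le (I k s)). assert (0 < phi k * p k) by nra. apply Rmult_le_compat_l; lra. }
 assert (HCw : 0 <= Cw) by (unfold Cw; apply Rmult_le_pos; [left; apply Rinv_0_lt_compat; lra| apply sumk_nonneg; intros j Hj; specialize (Hphi j Hj); specialize (Hp j Hj); nra]).
 assert (- (Cw * r) <= Rmin (Th s) 0) by (apply Rmin_glb; [lra| assert (0 <= Cw * r) by nra; lra]).
 pose proof (rmin_nonpos (Th s)). rewrite <- Hrr.
 assert (0 <= Cw * r) by nra.
 assert (Rmin (Th s) 0 * Rmin (Th s) 0 <= (Cw * r) * (Cw * r)) by nra. lra. Qed.

Lemma Wd_bound T : 0 < T -> exists K, 0 <= K /\ forall s, 0 < s <= T -> Wd s <= K * Wf s.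
Proof.
 intros HT. destruct (bounds_0T T) as [B HB].
 set (Cw := / kav * sumk n (fun j => phi j * p j)).
 set (TB := / kav * sumk n (fun j => phi j * p j * B)).
 assert (Hkav := kav_pos).
 assert (HCw : 0 <= Cw) by (unfold Cw; apply Rmult_le_pos; [left; apply Rinv_0_lt_compat; lra| apply sumk_nonneg; intros j Hj; specialize (Hphi j Hj); specialize (Hp j Hj); nra]).
 assert (HB0 : 0 <= B). { destruct (HB 1%nat ltac:(lia) 0 ltac:(lra)) as [A _]. pose proof (Rabs_pos (S 1%nat 0)). lra. }
 assert (HTB : 0 <= TB) by (unfold TB; apply Rmult_le_pos; [left; apply Rinv_0_lt_compat; lra| apply sumk_nonneg; intros j Hj; specialize (Hphi j Hj); specialize (Hp j Hj); apply Rmult_le_pos; nra]).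
 set (KK := fun k => 8 * (lam k*TB + delta*lam k*TB + lam k*B + delta*lam k*B + gamma + eta + omega + mu k + beta)).
 set (CC := fun k => lam k*B + delta*lam k*B).
 assert (HKK : forall k, (1 <= k <= n)%nat -> 0 <= KK k).
 { intros k Hk. specialize (Hlam k Hk). specialize (Hmu k Hk). unfold KK.
   assert (0 <= lam k * TB) by nra. assert (0 <= lam k * B) by nra. assert (0 <= delta * lam k) by nra.
   assert (0 <= delta*lam k*TB) by nra. assert (0 <= delta*lam k*B) by nra. lra. }
 assert (HCC : forall k, (1 <= k <= n)%nat -> 0 <= CC k).
 { intros k Hk. specialize (Hlam k Hk). unfold CC. assert (0 <= lam k * B) by nra. assert (0 <= delta * lam k) by nra.
   assert (0 <= delta*lam k*B) by nra. lra. }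
 assert (HsKK : 0 <= sumk n KK) by (apply sumk_nonneg; auto).
 assert (HsCC : 0 <= sumk n CC) by (apply sumk_nonneg; auto).
 exists (sumk n KK + sumk n CC * (Cw * Cw)). split. assert (0 <= Cw * Cw) by nra. nra.
 intros s Hs.
 assert (HTh : Rabs (Th s) <= TB) by (apply Th_abs; intros k Hk; apply (HB k Hk s); lra).
 set (tm := Rmin (Th s) 0).
 set (Y := fun k => nm (S k s) + nm (V k s) + nm (I k s) + nm (Q k s)).
 assert (HY : forall k, (1 <= k <= n)%nat -> 0 <= Y k).
 { intros k Hk. unfold Y. pose proof (nm_nonneg (S k s)); pose proof (nm_nonneg (V k s));
   pose proof (nm_nonneg (I k s)); pose proof (nm_nonneg (Q k s)); lra. }
 assert (Hstep : Wd s <= sumk n (fun k => KK k * Y k + CC k * (tm * tm))).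
 { unfold Wd. apply sumk_le. intros k Hk. destruct (HB k Hk s ltac:(lra)) as [B1 [B2 _]].
   pose proof (Ns_pos k ltac:(lia)). assert (0 < Lam b d Phi k) by (rewrite Lam_eq by lia; nra).
   pose proof (negpart_ineq (S k s) (V k s) (I k s) (Q k s) (Th s) (Lam b d Phi k) (lam k) (mu k) gamma eta omega delta beta d B TB
     H0 (Hlam k Hk) (Hmu k Hk) Hgamma ltac:(rewrite <- Heq; lra) Homega ltac:(lra) Hbeta Hd B1 B2 HTh).
   unfold dS, dV, dI, dQ, KK, CC, Y, tm. lra. }
 rewrite sumk_plus in Hstep.
 assert (sumk n (fun k => KK k * Y k) <= sumk n KK * sumk n Y) by (apply sumk_wsum_le; intros; split; auto).
 assert (sumk n (fun k => CC k * (tm * tm)) = sumk n CC * (tm * tm)) by (transitivity ((tm*tm) * sumk n CC); [rewrite <- sumk_scal; apply sumk_ext; intros; ring | ring]).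
 assert (Hsy : sumk n Y = Wf s) by reflexivity.
 assert (tm * tm <= Cw * Cw * Wf s) by (apply tm_bound).
 assert (sumk n CC * (tm * tm) <= sumk n CC * (Cw * Cw * Wf s)) by (apply Rmult_le_compat_l; auto).
 rewrite Hsy in H. lra. Qed.

Lemma nonneg t : 0 <= t -> forall k, (1 <= k <= n)%nat -> 0 <= S k t /\ 0 <= V k t /\ 0 <= I k t /\ 0 <= Q k t.
Proof. intros Ht k Hk. destruct (Rle_lt_or_eq_dec 0 t Ht) as [Htp|Ht0].
 2: { subst. destruct (Hinit k Hk) as [A [B [C [D _]]]]. auto. }
 destruct (Wd_bound t Htp) as [K [HK HWd]].
 assert (HW : Wf t = 0) by (apply (gronwall0 Wf Wd K t HK Wf_deriv HWd (fun s _ => Wf_nonneg s) Wf_small); lra).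
 assert (Y : nm (S k t) + nm (V k t) + nm (I k t) + nm (Q k t) <= 0).
 { rewrite <- HW. unfold Wf. apply (sumk_ge_term n (fun k => nm (S k t) + nm (V k t) + nm (I k t) + nm (Q k t))); auto.
   intros j Hj. pose proof (nm_nonneg (S j t)); pose proof (nm_nonneg (V j t)); pose proof (nm_nonneg (I j t)); pose proof (nm_nonneg (Q j t)); lra. }
 pose proof (nm_nonneg (S k t)); pose proof (nm_nonneg (V k t)); pose proof (nm_nonneg (I k t)); pose proof (nm_nonneg (Q k t)).
 repeat split; apply nm_zero_inv; lra. Qed.

Definition ThM := / kav * sumk n (fun j => phi j * p j).

Lemma vars_le1 t k : 0 <= t -> (1 <= k <= n)%nat -> S k t <= Ns k /\ V k t <= Ns k /\ I k t <= Ns k /\ Q k t <= Ns k.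
Proof. intros Ht Hk. pose proof (conservation k t Hk Ht). destruct (nonneg t Ht k Hk) as [A [B [C D]]]. lra. Qed.

Lemma Th_range t : 0 <= t -> 0 <= Th t <= ThM.
Proof. intros Ht. assert (Hkav := kav_pos). unfold Th, Theta, ThM. fold kav. split.
 - apply Rmult_le_pos. left; apply Rinv_0_lt_compat; lra. apply sumk_nonneg. intros k Hk.
   destruct (nonneg t Ht k Hk) as [_ [_ [C _]]]. specialize (Hphi k Hk); specialize (Hp k Hk). apply Rmult_le_pos; nra.
 - apply Rmult_le_compat_l. left; apply Rinv_0_lt_compat; lra. apply sumk_le. intros k Hk.
   destruct (nonneg t Ht k Hk) as [_ [_ [C _]]]. destruct (vars_le1 t k Ht Hk) as [_ [_ [C2 _]]].
   pose proof (Ns_pos k ltac:(lia)). specialize (Hphi k Hk); specialize (Hp k Hk).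
   assert (0 < phi k * p k) by nra. assert (phi k * p k * I k t <= phi k * p k * 1) by (apply Rmult_le_compat_l; lra). lra. Qed.

Lemma Th_pos t : 0 <= t -> 0 < Th t.
Proof. intros Ht. assert (Hkav := kav_pos). destruct (sumk_exists_pos n _ HI0) as [j [Hj Hpj]].
 specialize (Hp j Hj) as Hpj'. assert (HIj0 : 0 < I j 0) by (apply Rmult_lt_reg_l with (p j); lra).
 assert (HIj : 0 < I j t).
 { destruct (Rle_lt_or_eq_dec 0 t Ht) as [Htp|Ht0]; [|subst; auto].
   destruct (rcs j Hj) as [_ [_ [R3 _]]].
   assert (L := expo_lb (I j) (dI j) kap ltac:(unfold kap; lra) (fun s hs => proj1 (proj2 (proj2 (ders j s Hj hs))))).
   assert (forall s, 0 < s -> 0 <= dI j s + kap * I j s).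
   { intros s hs. unfold dI, fI, kap. destruct (nonneg s ltac:(lra) j Hj) as [A [B _]]. pose proof (Th_range s ltac:(lra)).
     specialize (Hlam j Hj). assert (0 <= Th s * (S j s + delta * V j s)) by (apply Rmult_le_pos; nra). nra. }
   specialize (L H R3 ltac:(lra) t Htp). pose proof (exp_pos (- (kap * t))). nra. }
 unfold Th, Theta. fold kav. apply Rmult_lt_0_compat. apply Rinv_0_lt_compat; lra.
 eapply Rlt_le_trans; [|apply (sumk_ge_term n (fun i => phi i * p i * I i t) j)]; auto.
 specialize (Hphi j Hj). apply Rmult_lt_0_compat; [apply Rmult_lt_0_compat|]; lra.
 intros k Hk. destruct (nonneg t Ht k Hk) as [_ [_ [C _]]]. specialize (Hphi k Hk); specialize (Hp k Hk). apply Rmult_le_pos; nra. Qed.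

Lemma ThM_ge t : 0 <= t -> Th t <= ThM.
Proof. intros. apply Th_range; auto. Qed.

Lemma S_pos k t : (1 <= k <= n)%nat -> 0 < t -> 0 < S k t.
Proof. intros Hk Ht. destruct (rcs k Hk) as [R1 _]. destruct (Hinit k Hk) as [A0 _].
 assert (HThM : 0 <= ThM) by (pose proof (Th_range 0 ltac:(lra)); lra).
 specialize (Hlam k Hk) as Hl. specialize (Hmu k Hk) as Hm.
 apply (expo_pos (S k) (dS k) (lam k * ThM + mu k + d)). assert (0 <= lam k * ThM) by nra. lra.
 intros s hs; apply (ders k s Hk hs). 2: auto. 2: auto. 2: auto.
 intros s hs. unfold dS, fS. rewrite Lam_eq by lia. pose proof (Ns_pos k ltac:(lia)).
 destruct (nonneg s ltac:(lra) k Hk) as [A [B [C D]]]. pose proof (ThM_ge s ltac:(lra)).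
 assert (0 <= lam k * (ThM - Th s) * S k s) by (apply Rmult_le_pos; [apply Rmult_le_pos|]; lra).
 assert (0 <= gamma * I k s) by nra. assert (0 <= eta * Q k s) by (rewrite <- Heq; nra). assert (0 <= omega * V k s) by nra.
 assert (0 < d * Ns k) by nra. nra. Qed.

Lemma V_pos k t : (1 <= k <= n)%nat -> 0 < t -> 0 < V k t.
Proof. intros Hk Ht. destruct (rcs k Hk) as [_ [R2 _]]. destruct (Hinit k Hk) as [_ [B0 _]].
 assert (HThM : 0 <= ThM) by (pose proof (Th_range 0 ltac:(lra)); lra).
 specialize (Hlam k Hk) as Hl. specialize (Hmu k Hk) as Hm.
 apply (expo_pos (V k) (dV k) (delta * lam k * ThM + d + omega)). assert (0 <= delta * lam k * ThM) by (apply Rmult_le_pos; [apply Rmult_le_pos|]; lra). lra.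
 intros s hs; apply (ders k s Hk hs). 2: auto. 2: auto. 2: auto.
 intros s hs. unfold dV, fV. pose proof (S_pos k s Hk hs).
 destruct (nonneg s ltac:(lra) k Hk) as [A [B [C D]]]. pose proof (ThM_ge s ltac:(lra)).
 assert (0 <= delta * lam k * (ThM - Th s) * V k s) by (apply Rmult_le_pos; [apply Rmult_le_pos; [apply Rmult_le_pos|]|]; lra).
 assert (0 < mu k * S k s) by nra. nra. Qed.

Lemma I_pos k t : (1 <= k <= n)%nat -> 0 < t -> 0 < I k t.
Proof. intros Hk Ht. destruct (rcs k Hk) as [_ [_ [R3 _]]]. destruct (Hinit k Hk) as [_ [_ [C0 _]]].
 specialize (Hlam k Hk) as Hl.
 apply (expo_pos (I k) (dI k) kap). unfold kap; lra.
 intros s hs; apply (ders k s Hk hs). 2: auto. 2: auto. 2: auto.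
 intros s hs. unfold dI, fI, kap. pose proof (S_pos k s Hk hs). pose proof (V_pos k s Hk hs). pose proof (Th_pos s ltac:(lra)).
 assert (0 < Th s * (S k s + delta * V k s)) by (apply Rmult_lt_0_compat; nra). nra. Qed.


Section Lyap.
Variable ths : R.
Hypothesis Hths : 0 < ths.
Hypothesis HG : Gf ths = 1.

Lemma Th_star : Theta n p phi (fun k => Ie k ths) = ths.
Proof. rewrite Theta_Ie, HG; lra. Qed.

Lemma eqrel k : (1 <= k <= n)%nat ->
  d * Ns k + gamma * (Ns k - Se k ths - Ve k ths) + omega * Ve k ths - (mu k + d) * Se k ths = lam k * Se k ths * ths /\
  mu k * Se k ths = delta * lam k * Ve k ths * ths + (d + omega) * Ve k ths /\
  (gamma + beta + d) * Ie k ths = lam k * ths * (Se k ths + delta * Ve k ths).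
Proof. intros Hk. destruct (eq_eqs k ths Hk Hths) as [E1 [E2 [E3 E4]]]. pose proof (eq_sum k ths Hk Hths) as Es.
 unfold fS, fV, fI, fQ in *. rewrite Lam_eq in E1 by lia. rewrite <- Heq in E1. repeat split.
 - replace (Ns k - Se k ths - Ve k ths) with (Ie k ths + Qe k ths) by lra. lra.
 - lra.
 - lra. Qed.

Definition cw k := phi k * p k / kap.
Definition Lf t := sumk n (fun k => cw k * (Se k ths * gfun (S k t / Se k ths) + Ve k ths * gfun (V k t / Ve k ths) + Ie k ths * gfun (I k t / Ie k ths))).
Definition Ld t := sumk n (fun k => cw k * ((1 - Se k ths / S k t) * dS k t + (1 - Ve k ths / V k t) * dV k t + (1 - Ie k ths / I k t) * dI k t)).
Definition Fk k t := (d + gamma) * (S k t - Se k ths) * (S k t - Se k ths) / S k t + (d + gamma) * Ve k ths * gfun (V k t / Ve k ths)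
   + lam k * Se k ths * ths * gfun ((S k t / Se k ths) * (Th t / ths) / (I k t / Ie k ths)).

Lemma cw_pos k : (1 <= k <= n)%nat -> 0 < cw k.
Proof. intros Hk. unfold cw, kap. specialize (Hphi k Hk); specialize (Hp k Hk). apply Rdiv_lt_0_compat; nra. Qed.

Lemma Lf_deriv t : 0 < t -> derivable_pt_lim Lf t (Ld t).
Proof. intros Ht. unfold Lf, Ld.
 apply (sumk_deriv n (fun k s => cw k * (Se k ths * gfun (S k s / Se k ths) + Ve k ths * gfun (V k s / Ve k ths) + Ie k ths * gfun (I k s / Ie k ths)))).
 intros k Hk. destruct (ders k t Hk Ht) as [A [B [C _]]]. destruct (eq_pos k ths Hk Hths) as [P1 [P2 [P3 _]]].
 apply derivable_pt_lim_scal.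
 apply derivable_pt_lim_plus; [apply derivable_pt_lim_plus|]; apply gfun_chain; auto.
 apply S_pos; auto. apply V_pos; auto. apply I_pos; auto. Qed.

Lemma Lf_nonneg t : 0 < t -> 0 <= Lf t.
Proof. intros Ht. unfold Lf. apply sumk_nonneg. intros k Hk. pose proof (cw_pos k Hk).
 destruct (eq_pos k ths Hk Hths) as [P1 [P2 [P3 _]]]. pose proof (S_pos k t Hk Ht). pose proof (V_pos k t Hk Ht). pose proof (I_pos k t Hk Ht).
 assert (0 <= gfun (S k t / Se k ths)) by (apply gfun_nonneg, Rdiv_lt_0_compat; auto).
 assert (0 <= gfun (V k t / Ve k ths)) by (apply gfun_nonneg, Rdiv_lt_0_compat; auto).
 assert (0 <= gfun (I k t / Ie k ths)) by (apply gfun_nonneg, Rdiv_lt_0_compat; auto).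
 apply Rmult_le_pos; [lra|]. assert (0 <= Se k ths * gfun (S k t / Se k ths)) by nra.
 assert (0 <= Ve k ths * gfun (V k t / Ve k ths)) by nra. assert (0 <= Ie k ths * gfun (I k t / Ie k ths)) by nra. lra. Qed.

Lemma Fk_nonneg k t : (1 <= k <= n)%nat -> 0 < t -> 0 <= Fk k t.
Proof. intros Hk Ht. unfold Fk. destruct (eq_pos k ths Hk Hths) as [P1 [P2 [P3 _]]].
 pose proof (S_pos k t Hk Ht). pose proof (V_pos k t Hk Ht). pose proof (I_pos k t Hk Ht). pose proof (Th_pos t ltac:(lra)).
 specialize (Hlam k Hk).
 assert (0 <= (d + gamma) * (S k t - Se k ths) * (S k t - Se k ths) / S k t).
 { unfold Rdiv. apply Rmult_le_pos. rewrite Rmult_assoc. apply Rmult_le_pos. lra. apply Rle_0_sqr. left; apply Rinv_0_lt_compat; auto. }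
 assert (0 <= gfun (V k t / Ve k ths)) by (apply gfun_nonneg, Rdiv_lt_0_compat; auto).
 assert (0 < (S k t / Se k ths) * (Th t / ths) / (I k t / Ie k ths)).
 { apply Rdiv_lt_0_compat; [apply Rmult_lt_0_compat|]; apply Rdiv_lt_0_compat; auto. }
 assert (0 <= gfun ((S k t / Se k ths) * (Th t / ths) / (I k t / Ie k ths))) by (apply gfun_nonneg; auto).
 assert (0 <= (d + gamma) * Ve k ths) by nra. assert (0 <= lam k * Se k ths * ths) by (apply Rmult_le_pos; [apply Rmult_le_pos|]; lra).
 assert (0 <= (d + gamma) * Ve k ths * gfun (V k t / Ve k ths)) by nra.
 assert (0 <= lam k * Se k ths * ths * gfun ((S k t / Se k ths) * (Th t / ths) / (I k t / Ie k ths))) by nra. lra. Qed.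

Lemma Ld_bound t k0 : 0 < t -> (1 <= k0 <= n)%nat -> Ld t <= - (cw k0 * Fk k0 t).
Proof. intros Ht Hk0. assert (Hkav := kav_pos).
 assert (Hterm : forall k, (1 <= k <= n)%nat ->
   cw k * ((1 - Se k ths / S k t) * dS k t + (1 - Ve k ths / V k t) * dV k t + (1 - Ie k ths / I k t) * dI k t)
   <= - (cw k * Fk k t) + phi k * p k * Ie k ths * (Th t / ths - I k t / Ie k ths - ln (Th t / ths) + ln (I k t / Ie k ths))).
 { intros k Hk. destruct (eq_pos k ths Hk Hths) as [P1 [P2 [P3 _]]]. destruct (eqrel k Hk) as [E1 [E2 E3]].
   pose proof (cw_pos k Hk). pose proof (conservation k t Hk ltac:(lra)) as Hc.
   assert (HdS : dS k t = d * Ns k + gamma * (Ns k - S k t - V k t) + omega * V k t - (mu k + d) * S k t - lam k * S k t * Th t).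
   { unfold dS, fS. rewrite Lam_eq by lia. rewrite <- Heq. replace (Ns k - S k t - V k t) with (I k t + Q k t) by lra. ring. }
   assert (HdI : dI k t = lam k * Th t * (S k t + delta * V k t) - (gamma + beta + d) * I k t) by (unfold dI, fI; ring).
   rewrite HdS, HdI. unfold dV.
   pose proof (lyap_k (S k t) (V k t) (I k t) (Th t) (Se k ths) (Ve k ths) (Ie k ths) ths (lam k) (mu k) delta gamma beta d omega (Ns k)
     (S_pos k t Hk Ht) (V_pos k t Hk Ht) (I_pos k t Hk Ht) (Th_pos t ltac:(lra)) P1 P2 P3 Hths (Hlam k Hk) ltac:(lra) Hgamma Hd ltac:(lra) E1 E2 E3) as LK.
   unfold fV. set (X := (1 - Se k ths / S k t) * _ + _ + _) in *.
   fold (Fk k t) in LK. unfold Fk in LK |- *.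
   assert (cw k * X <= cw k * (- ((d + gamma) * (S k t - Se k ths) * (S k t - Se k ths) / S k t + (d + gamma) * Ve k ths * gfun (V k t / Ve k ths) +
        lam k * Se k ths * ths * gfun (S k t / Se k ths * (Th t / ths) / (I k t / Ie k ths))) +
     (gamma + beta + d) * Ie k ths * (Th t / ths - I k t / Ie k ths - ln (Th t / ths) + ln (I k t / Ie k ths)))) by (apply Rmult_le_compat_l; lra).
   assert (cw k * (gamma + beta + d) = phi k * p k) by (unfold cw, kap; field; lra).
   assert (cw k * ((gamma + beta + d) * Ie k ths * (Th t / ths - I k t / Ie k ths - ln (Th t / ths) + ln (I k t / Ie k ths)))
     = phi k * p k * Ie k ths * (Th t / ths - I k t / Ie k ths - ln (Th t / ths) + ln (I k t / Ie k ths))) by (rewrite <- H1; ring).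
   lra. }
 unfold Ld. eapply Rle_trans. apply sumk_le. exact Hterm.
 rewrite sumk_plus.
 assert (J : sumk n (fun k => phi k * p k * Ie k ths * (Th t / ths - I k t / Ie k ths - ln (Th t / ths) + ln (I k t / Ie k ths))) <= 0).
 { replace (Th t / ths) with ((kav * Th t) / (kav * ths)) by (field; lra).
   apply (jensen_cross n (fun k => phi k * p k) (fun k => Ie k ths) (fun k => I k t)).
   - intros k Hk. pose proof (Hphi k Hk). pose proof (Hp k Hk). destruct (eq_pos k ths Hk Hths) as [_ [_ [P3 _]]].
     split; [nra| split; auto]. apply I_pos; auto.
   - pose proof (Th_pos t ltac:(lra)). nra.
   - nra.
   - unfold Th, Theta. fold kav. field. lra.
   - pose proof Th_star as E. unfold Theta in E. fold kav in E.
     transitivity (kav * (/ kav * sumk n (fun k => phi k * p k * Ie k ths))). field; lra. rewrite E; reflexivity. }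
 assert (sumk n (fun k => - (cw k * Fk k t)) <= - (cw k0 * Fk k0 t)).
 { apply (sumk_le_term n (fun k => - (cw k * Fk k t))); auto. intros k Hk. pose proof (cw_pos k Hk). pose proof (Fk_nonneg k t Hk Ht). nra. }
 lra. Qed.



Lemma Lf_mono t : 1 <= t -> Lf t <= Lf 1.
Proof. intros Ht. destruct (Rle_lt_or_eq_dec 1 t Ht) as [Hl|He]; [|subst; lra].
 apply (mvt_nonpos Lf Ld 1 t Hl). intros c Hc; apply Lf_deriv; lra.
 intros c Hc. pose proof (Ld_bound c 1%nat ltac:(lra) ltac:(lia)). pose proof (cw_pos 1%nat ltac:(lia)).
 pose proof (Fk_nonneg 1%nat c ltac:(lia) ltac:(lra)). nra. Qed.

Lemma Lf_ge_terms k t : (1 <= k <= n)%nat -> 0 < t ->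
  cw k * (Se k ths * gfun (S k t / Se k ths)) <= Lf t /\
  cw k * (Ve k ths * gfun (V k t / Ve k ths)) <= Lf t /\
  cw k * (Ie k ths * gfun (I k t / Ie k ths)) <= Lf t.
Proof. intros Hk Ht.
 assert (Hnn : forall j, (1 <= j <= n)%nat -> 0 <= Se j ths * gfun (S j t / Se j ths) /\ 0 <= Ve j ths * gfun (V j t / Ve j ths) /\ 0 <= Ie j ths * gfun (I j t / Ie j ths)).
 { intros j Hj. destruct (eq_pos j ths Hj Hths) as [P1 [P2 [P3 _]]].
   pose proof (S_pos j t Hj Ht). pose proof (V_pos j t Hj Ht). pose proof (I_pos j t Hj Ht).
   assert (0 <= gfun (S j t / Se j ths)) by (apply gfun_nonneg, Rdiv_lt_0_compat; auto).
   assert (0 <= gfun (V j t / Ve j ths)) by (apply gfun_nonneg, Rdiv_lt_0_compat; auto).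
   assert (0 <= gfun (I j t / Ie j ths)) by (apply gfun_nonneg, Rdiv_lt_0_compat; auto).
   repeat split; apply Rmult_le_pos; lra. }
 assert (Hge' : cw k * (Se k ths * gfun (S k t / Se k ths) + Ve k ths * gfun (V k t / Ve k ths) + Ie k ths * gfun (I k t / Ie k ths)) <= Lf t).
 { unfold Lf. apply (sumk_ge_term n (fun k => cw k * (Se k ths * gfun (S k t / Se k ths) + Ve k ths * gfun (V k t / Ve k ths) + Ie k ths * gfun (I k t / Ie k ths)))); auto.
   intros j Hj. pose proof (cw_pos j Hj). destruct (Hnn j Hj) as [A [B C]]. apply Rmult_le_pos; lra. }
 pose proof (cw_pos k Hk). destruct (Hnn k Hk) as [A [B C]].
 assert (cw k * (Se k ths * gfun (S k t / Se k ths)) >= 0) by (apply Rle_ge, Rmult_le_pos; lra).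
 assert (0 <= cw k * (Ve k ths * gfun (V k t / Ve k ths))) by (apply Rmult_le_pos; lra).
 assert (0 <= cw k * (Ie k ths * gfun (I k t / Ie k ths))) by (apply Rmult_le_pos; lra).
 repeat split; nra. Qed.

Lemma lower_k k : (1 <= k <= n)%nat -> exists m, 0 < m /\ forall t, 1 <= t -> m <= S k t /\ m <= V k t /\ m <= I k t.
Proof. intros Hk. destruct (eq_pos k ths Hk Hths) as [P1 [P2 [P3 _]]]. pose proof (cw_pos k Hk) as Hc.
 set (L1 := Lf 1).
 set (mS := Se k ths * exp (-1 - L1 / (cw k * Se k ths))).
 set (mV := Ve k ths * exp (-1 - L1 / (cw k * Ve k ths))).
 set (mI := Ie k ths * exp (-1 - L1 / (cw k * Ie k ths))).
 assert (Hm : forall (X : R -> R) Xs, 0 < Xs -> (forall t, 1 <= t -> 0 < X t) ->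
   (forall t, 1 <= t -> cw k * (Xs * gfun (X t / Xs)) <= L1) ->
   forall t, 1 <= t -> Xs * exp (-1 - L1 / (cw k * Xs)) <= X t).
 { intros X Xs HXs HX HL t Ht. specialize (HL t Ht). specialize (HX t Ht).
   assert (gfun (X t / Xs) <= L1 / (cw k * Xs)).
   { apply Rmult_le_reg_l with (cw k * Xs). nra. replace (cw k * Xs * (L1 / (cw k * Xs))) with L1 by (field; lra). nra. }
   apply gfun_lb in H; [|apply Rdiv_lt_0_compat; auto].
   apply Rmult_le_reg_r with (/ Xs). apply Rinv_0_lt_compat; auto.
   replace (Xs * exp (-1 - L1 / (cw k * Xs)) * / Xs) with (exp (-1 - L1 / (cw k * Xs))) by (field; lra). exact H. }
 exists (Rmin mS (Rmin mV mI)). split.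
 - unfold mS, mV, mI. repeat apply Rmin_glb_lt; apply Rmult_lt_0_compat; auto; apply exp_pos.
 - intros t Ht.
   assert (A : mS <= S k t). { apply (Hm (S k) (Se k ths)); auto. intros; apply S_pos; auto; lra.
     intros s Hs. pose proof (Lf_ge_terms k s Hk ltac:(lra)). pose proof (Lf_mono s Hs). unfold L1. lra. }
   assert (B : mV <= V k t). { apply (Hm (V k) (Ve k ths)); auto. intros; apply V_pos; auto; lra.
     intros s Hs. pose proof (Lf_ge_terms k s Hk ltac:(lra)). pose proof (Lf_mono s Hs). unfold L1. lra. }
   assert (C : mI <= I k t). { apply (Hm (I k) (Ie k ths)); auto. intros; apply I_pos; auto; lra.
     intros s Hs. pose proof (Lf_ge_terms k s Hk ltac:(lra)). pose proof (Lf_mono s Hs). unfold L1. lra. }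
   pose proof (Rmin_l mS (Rmin mV mI)). pose proof (Rmin_r mS (Rmin mV mI)). pose proof (Rmin_l mV mI). pose proof (Rmin_r mV mI).
   repeat split; lra. Qed.


Lemma state_ranges k t : (1 <= k <= n)%nat -> 0 <= t ->
  0 <= S k t <= 1 /\ 0 <= V k t <= 1 /\ 0 <= I k t <= 1 /\ 0 <= Q k t <= 1 /\ 0 <= Th t <= ThM.
Proof. intros Hk Ht. destruct (nonneg t Ht k Hk) as [A [B [C D]]]. destruct (vars_le1 t k Ht Hk) as [A' [B' [C' D']]].
 pose proof (Ns_pos k ltac:(lia)). pose proof (Th_range t Ht). repeat split; lra. Qed.

Lemma state_LB k : (1 <= k <= n)%nat -> LB 1 (S k) /\ LB 1 (V k) /\ LB 1 (I k) /\ LB 1 (Q k).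
Proof. intros Hk. pose proof (Ns_pos k ltac:(lia)). specialize (Hlam k Hk) as Hl. specialize (Hmu k Hk) as Hm.
 assert (HL : 0 < Lam b d Phi k) by (rewrite Lam_eq by lia; nra).
 assert (HThM : 0 <= ThM) by (pose proof (Th_range 0 ltac:(lra)); lra).
 assert (Hst : forall t, 1 <= t -> 0 <= S k t <= 1 /\ 0 <= V k t <= 1 /\ 0 <= I k t <= 1 /\ 0 <= Q k t <= 1 /\ 0 <= Th t <= ThM)
   by (intros; apply state_ranges; auto; lra).
 assert (Hpr : forall t, 1 <= t -> 0 <= S k t * Th t <= ThM /\ 0 <= V k t * Th t <= ThM).
 { intros t Ht. destruct (Hst t Ht) as [A [B [C [D E]]]]. split; split; nra. }
 assert (Hdl : forall t, 1 <= t -> 0 <= delta * lam k) by (intros; nra).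
 split; [|split; [|split]].
 - apply (LB_deriv 1 (S k) (dS k)). intros t Ht; exact (proj1 (ders k t Hk ltac:(lra))).
   apply Bnd_of_bounds with (Lam b d Phi k - lam k * ThM - (mu k + d)) (Lam b d Phi k + gamma + eta + omega).
   intros t Ht. destruct (Hst t Ht) as [A [B [C [D E]]]]. destruct (Hpr t Ht) as [P1 P2]. unfold dS, fS.
   assert (lam k * S k t * Th t <= lam k * ThM) by (rewrite Rmult_assoc; apply Rmult_le_compat_l; lra).
   assert (0 <= lam k * S k t * Th t) by (rewrite Rmult_assoc; apply Rmult_le_pos; lra).
   assert (0 <= gamma * I k t <= gamma) by (split; nra). assert (0 <= eta * Q k t <= eta) by (rewrite <- Heq; split; nra).
   assert (0 <= omega * V k t <= omega) by (split; nra). assert (0 <= (mu k + d) * S k t <= mu k + d) by (split; nra). lra.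
   apply Bnd_of_bounds with 0 1. intros; apply Hst; auto.
 - apply (LB_deriv 1 (V k) (dV k)). intros t Ht; exact (proj1 (proj2 (ders k t Hk ltac:(lra)))).
   apply Bnd_of_bounds with (- (delta * lam k * ThM) - (d + omega)) (mu k).
   intros t Ht. destruct (Hst t Ht) as [A [B [C [D E]]]]. destruct (Hpr t Ht) as [P1 P2]. unfold dV, fV. specialize (Hdl t Ht).
   assert (delta * lam k * V k t * Th t <= delta * lam k * ThM) by (rewrite Rmult_assoc; apply Rmult_le_compat_l; lra).
   assert (0 <= delta * lam k * V k t * Th t) by (rewrite Rmult_assoc; apply Rmult_le_pos; lra).
   assert (0 <= mu k * S k t <= mu k) by (split; nra). assert (0 <= (d + omega) * V k t <= d + omega) by (split; nra). lra.
   apply Bnd_of_bounds with 0 1. intros; apply Hst; auto.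
 - apply (LB_deriv 1 (I k) (dI k)). intros t Ht; exact (proj1 (proj2 (proj2 (ders k t Hk ltac:(lra))))).
   apply Bnd_of_bounds with (- (gamma + beta + d)) (lam k * ThM + delta * lam k * ThM).
   intros t Ht. destruct (Hst t Ht) as [A [B [C [D E]]]]. destruct (Hpr t Ht) as [P1 P2]. unfold dI, fI. specialize (Hdl t Ht).
   assert (delta * lam k * V k t * Th t <= delta * lam k * ThM) by (rewrite Rmult_assoc; apply Rmult_le_compat_l; lra).
   assert (0 <= delta * lam k * V k t * Th t) by (rewrite Rmult_assoc; apply Rmult_le_pos; lra).
   assert (lam k * S k t * Th t <= lam k * ThM) by (rewrite Rmult_assoc; apply Rmult_le_compat_l; lra).
   assert (0 <= lam k * S k t * Th t) by (rewrite Rmult_assoc; apply Rmult_le_pos; lra).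
   assert (0 <= (gamma + beta + d) * I k t <= gamma + beta + d) by (split; nra). lra.
   apply Bnd_of_bounds with 0 1. intros; apply Hst; auto.
 - apply (LB_deriv 1 (Q k) (dQ k)). intros t Ht; exact (proj2 (proj2 (proj2 (ders k t Hk ltac:(lra))))).
   apply Bnd_of_bounds with (- (eta + d)) beta.
   intros t Ht. destruct (Hst t Ht) as [A [B [C [D E]]]]. unfold dQ, fQ.
   assert (0 <= beta * I k t <= beta) by (split; nra). assert (0 <= (eta + d) * Q k t <= eta + d) by (rewrite <- Heq; split; nra). lra.
   apply Bnd_of_bounds with 0 1. intros; apply Hst; auto.
Qed.

Lemma Th_LB : LB 1 Th.
Proof. apply LB_ext with (fun t => / kav * sumk n (fun i => phi i * p i * I i t)).
 intros; unfold Th, Theta; reflexivity.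
 apply (LB_scal 1 (/ kav) (fun t => sumk n (fun i => phi i * p i * I i t))).
 apply (LB_sumk 1 n (fun i t => phi i * p i * I i t)). intros k Hk.
 apply (LB_scal 1 (phi k * p k) (I k)). apply state_LB; auto. Qed.

Lemma dS_LB k : (1 <= k <= n)%nat -> LB 1 (dS k).
Proof. intros Hk. destruct (state_LB k Hk) as [LS [LV [LI LQ]]]. pose proof Th_LB as LT.
 apply LB_ext with (fun t => Lam b d Phi k + (- lam k) * (S k t * Th t) + gamma * I k t + eta * Q k t + omega * V k t + (-(mu k + d)) * S k t).
 intros t Ht; unfold dS, fS; ring.
 apply (LB_plus 1 (fun t => Lam b d Phi k + (- lam k) * (S k t * Th t) + gamma * I k t + eta * Q k t + omega * V k t) (fun t => (-(mu k + d)) * S k t)).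
 apply (LB_plus 1 (fun t => Lam b d Phi k + (- lam k) * (S k t * Th t) + gamma * I k t + eta * Q k t) (fun t => omega * V k t)).
 apply (LB_plus 1 (fun t => Lam b d Phi k + (- lam k) * (S k t * Th t) + gamma * I k t) (fun t => eta * Q k t)).
 apply (LB_plus 1 (fun t => Lam b d Phi k + (- lam k) * (S k t * Th t)) (fun t => gamma * I k t)).
 apply (LB_plus 1 (fun t => Lam b d Phi k) (fun t => (- lam k) * (S k t * Th t))).
 apply LB_const. apply (LB_scal 1 (- lam k) (fun t => S k t * Th t)). apply (LB_mult 1 (S k) Th); auto.
 apply (LB_scal 1 gamma (I k)); auto. apply (LB_scal 1 eta (Q k)); auto. apply (LB_scal 1 omega (V k)); auto.
 apply (LB_scal 1 (-(mu k + d)) (S k)); auto. Qed.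


Lemma Fk_comp k t : (1 <= k <= n)%nat -> 1 <= t ->
  (d + gamma) * ((S k t - Se k ths) * (S k t - Se k ths)) <= Fk k t /\
  (d + gamma) * Ve k ths * gfun (V k t / Ve k ths) <= Fk k t /\
  lam k * Se k ths * ths * gfun ((S k t / Se k ths) * (Th t / ths) / (I k t / Ie k ths)) <= Fk k t.
Proof. intros Hk Ht. unfold Fk. destruct (eq_pos k ths Hk Hths) as [P1 [P2 [P3 _]]].
 pose proof (S_pos k t Hk ltac:(lra)). pose proof (V_pos k t Hk ltac:(lra)). pose proof (I_pos k t Hk ltac:(lra)). pose proof (Th_pos t ltac:(lra)).
 destruct (state_ranges k t Hk ltac:(lra)) as [A _].
 specialize (Hlam k Hk) as Hl.
 set (sq := (S k t - Se k ths) * (S k t - Se k ths)). assert (Hsq : 0 <= sq) by apply Rle_0_sqr.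
 assert (E : (d + gamma) * (S k t - Se k ths) * (S k t - Se k ths) / S k t = (d + gamma) * sq / S k t) by (unfold sq; field; lra).
 rewrite E.
 assert (sq <= sq / S k t). { apply Rmult_le_reg_r with (S k t); auto. replace (sq / S k t * S k t) with sq by (field; lra). nra. }
 assert ((d + gamma) * sq <= (d + gamma) * sq / S k t). { unfold Rdiv. rewrite Rmult_assoc. apply Rmult_le_compat_l; lra. }
 assert (0 <= gfun (V k t / Ve k ths)) by (apply gfun_nonneg, Rdiv_lt_0_compat; auto).
 assert (0 < (S k t / Se k ths) * (Th t / ths) / (I k t / Ie k ths)).
 { apply Rdiv_lt_0_compat; [apply Rmult_lt_0_compat|]; apply Rdiv_lt_0_compat; auto. }
 assert (0 <= gfun ((S k t / Se k ths) * (Th t / ths) / (I k t / Ie k ths))) by (apply gfun_nonneg; auto).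
 assert (0 <= (d + gamma) * Ve k ths) by nra. assert (0 <= lam k * Se k ths * ths) by (apply Rmult_le_pos; [apply Rmult_le_pos|]; lra).
 assert (0 <= (d + gamma) * Ve k ths * gfun (V k t / Ve k ths)) by nra.
 assert (0 <= lam k * Se k ths * ths * gfun ((S k t / Se k ths) * (Th t / ths) / (I k t / Ie k ths))) by nra.
 assert (0 <= (d + gamma) * sq) by nra.
 repeat split; lra. Qed.

Lemma barb k F : (1 <= k <= n)%nat -> (forall t, 1 <= t -> 0 <= F t <= cw k * Fk k t) -> LB 1 F -> lim_infty F 0.
Proof. intros Hk HF HL. apply (barbalat_dec Lf Ld F 1).
 - intros t Ht; apply Lf_deriv; lra.
 - intros t Ht. pose proof (Ld_bound t k ltac:(lra) Hk). specialize (HF t Ht). lra.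
 - intros t Ht; apply HF; auto.
 - intros t Ht; apply Lf_nonneg; lra.
 - apply HL. Qed.

Lemma conv k : (1 <= k <= n)%nat ->
  lim_infty (S k) (Se k ths) /\ lim_infty (V k) (Ve k ths) /\ lim_infty (I k) (Ie k ths) /\ lim_infty (Q k) (Qe k ths).
Proof. intros Hk. destruct (lower_k k Hk) as [m [Hm Hlow]].
 destruct (state_LB k Hk) as [LS [LV [LI LQ]]]. pose proof Th_LB as LT.
 destruct (eq_pos k ths Hk Hths) as [P1 [P2 [P3 P4]]]. pose proof (cw_pos k Hk) as Hc.
 specialize (Hlam k Hk) as Hl. assert (Hkav := kav_pos).
 assert (CS : lim_infty (S k) (Se k ths)).
 { set (c1 := cw k * (d + gamma)). assert (Hc1 : 0 < c1) by (unfold c1; nra).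
   assert (L := barb k (fun t => c1 * ((S k t - Se k ths) * (S k t - Se k ths))) Hk).
   assert (lim_infty (fun t => c1 * ((S k t - Se k ths) * (S k t - Se k ths))) 0).
   { apply L. intros t Ht. destruct (Fk_comp k t Hk Ht) as [A _]. split. apply Rmult_le_pos; [lra| apply Rle_0_sqr].
     unfold c1. rewrite Rmult_assoc. apply Rmult_le_compat_l; lra.
     apply (LB_scal 1 c1 (fun t => (S k t - Se k ths) * (S k t - Se k ths))). apply LB_sqs; auto. }
   apply lim_sq. assert (H2 := lim_scal (/ c1) _ _ H). rewrite Rmult_0_r in H2.
   eapply lim_ext_ev with (T0 := 0); [|exact H2]. intros t _. simpl. field. lra. }
 assert (CV : lim_infty (V k) (Ve k ths)).
 { set (c2 := cw k * ((d + gamma) * Ve k ths)). assert (Hc2 : 0 < c2) by (unfold c2; apply Rmult_lt_0_compat; nra).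
   assert (LVr : LB 1 (fun t => V k t / Ve k ths)).
   { apply LB_ext with (fun t => / Ve k ths * V k t). intros; unfold Rdiv; ring. apply (LB_scal 1 (/ Ve k ths) (V k)); auto. }
   assert (HVm : forall t, 1 <= t -> m / Ve k ths <= V k t / Ve k ths).
   { intros t Ht. destruct (Hlow t Ht) as [_ [B _]]. unfold Rdiv. apply Rmult_le_compat_r; [left; apply Rinv_0_lt_compat|]; lra. }
   assert (lim_infty (fun t => c2 * gfun (V k t / Ve k ths)) 0).
   { apply (barb k). auto. intros t Ht. destruct (Fk_comp k t Hk Ht) as [_ [B _]].
     assert (0 <= gfun (V k t / Ve k ths)) by (apply gfun_nonneg, Rdiv_lt_0_compat; [apply V_pos; auto; lra| auto]).
     split. apply Rmult_le_pos; lra. unfold c2. rewrite Rmult_assoc. apply Rmult_le_compat_l; lra.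
     apply (LB_scal 1 c2 (fun t => gfun (V k t / Ve k ths))). apply LB_gfun with (m / Ve k ths); auto. apply Rdiv_lt_0_compat; auto. }
   assert (H2 := lim_scal (/ c2) _ _ H). rewrite Rmult_0_r in H2.
   assert (H3 : lim_infty (fun t => gfun (V k t / Ve k ths)) 0).
   { eapply lim_ext_ev with (T0 := 0); [|exact H2]. intros t _. simpl. field. lra. }
   apply gfun_to1 with (t0 := 1) in H3. 2: { intros t Ht. apply Rdiv_lt_0_compat; [apply V_pos; auto; lra| auto]. }
   assert (H4 := lim_scal (Ve k ths) _ _ H3). rewrite Rmult_1_r in H4.
   eapply lim_ext_ev with (T0 := 0); [|exact H4]. intros t _. simpl. field. lra. }
 assert (CT : lim_infty Th ths).
 { assert (Hu : lim_infty (dS k) 0) by (apply (barbalat_lim (S k) (dS k) 1 (Se k ths)); [intros t Ht; exact (proj1 (ders k t Hk ltac:(lra)))| auto| apply dS_LB; auto]).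
   destruct (eqrel k Hk) as [E1 _].
   assert (L := lim_ratio (S k) (V k) (dS k) (Se k ths) (Ve k ths) (d * Ns k + gamma * Ns k) (- (gamma + mu k + d)) (omega - gamma) (lam k) CS CV Hu
     ltac:(apply Rgt_not_eq, Rmult_lt_0_compat; lra)).
   replace ths with ((d * Ns k + gamma * Ns k + - (gamma + mu k + d) * Se k ths + (omega - gamma) * Ve k ths) * / (lam k * Se k ths)).
   2: { apply Rmult_eq_reg_r with (lam k * Se k ths). rewrite Rmult_assoc, Rinv_l. lra. apply Rgt_not_eq, Rmult_lt_0_compat; lra.
        apply Rgt_not_eq, Rmult_lt_0_compat; lra. }
   eapply lim_ext_ev with (T0 := 1); [|exact L]. intros t Ht. simpl.
   pose proof (conservation k t Hk ltac:(lra)) as Hcons. pose proof (S_pos k t Hk ltac:(lra)).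
   assert (HdS : dS k t = d * Ns k + gamma * (Ns k - S k t - V k t) + omega * V k t - (mu k + d) * S k t - lam k * S k t * Th t).
   { unfold dS, fS. rewrite Lam_eq by lia. rewrite <- Heq. replace (Ns k - S k t - V k t) with (I k t + Q k t) by lra. ring. }
   rewrite HdS. field. split; lra. }
 assert (CI : lim_infty (I k) (Ie k ths)).
 { set (c3 := cw k * (lam k * Se k ths * ths)). assert (Hc3 : 0 < c3) by (unfold c3; apply Rmult_lt_0_compat; [lra| apply Rmult_lt_0_compat; [apply Rmult_lt_0_compat|]; lra]).
   set (w := fun t => (S k t / Se k ths) * (Th t / ths) / (I k t / Ie k ths)).
   set (mT := / kav * (phi k * p k * m)).
   assert (HmT : 0 < mT) by (unfold mT; pose proof (Hphi k Hk); pose proof (Hp k Hk); apply Rmult_lt_0_compat; [apply Rinv_0_lt_compat; lra| apply Rmult_lt_0_compat; nra]).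
   assert (HThl : forall t, 1 <= t -> mT <= Th t).
   { intros t Ht. unfold mT, Th, Theta. fold kav. apply Rmult_le_compat_l. left; apply Rinv_0_lt_compat; lra.
     destruct (Hlow t Ht) as [_ [_ C]]. pose proof (Hphi k Hk); pose proof (Hp k Hk).
     eapply Rle_trans; [|apply (sumk_ge_term n (fun i => phi i * p i * I i t) k)]; auto.
     apply Rmult_le_compat_l; [nra| lra].
     intros j Hj. destruct (state_ranges j t Hj ltac:(lra)) as [_ [_ [[C1 _] _]]]. pose proof (Hphi j Hj); pose proof (Hp j Hj).
     apply Rmult_le_pos; nra. }
   set (mw := (m / Se k ths) * (mT / ths) / (1 / Ie k ths)).
   assert (Hmw : 0 < mw).
   { assert (0 < m / Se k ths) by (apply Rdiv_lt_0_compat; lra). assert (0 < mT / ths) by (apply Rdiv_lt_0_compat; lra).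
     assert (0 < 1 / Ie k ths) by (apply Rdiv_lt_0_compat; lra). unfold mw. apply Rdiv_lt_0_compat; [apply Rmult_lt_0_compat|]; auto. }
   assert (Hwl : forall t, 1 <= t -> mw <= w t).
   { intros t Ht. unfold mw, w. destruct (Hlow t Ht) as [A [_ C]]. specialize (HThl t Ht).
     destruct (state_ranges k t Hk ltac:(lra)) as [_ [_ [[_ C2] _]]].
     assert (m / Se k ths <= S k t / Se k ths) by (unfold Rdiv; apply Rmult_le_compat_r; [left; apply Rinv_0_lt_compat|]; lra).
     assert (mT / ths <= Th t / ths) by (unfold Rdiv; apply Rmult_le_compat_r; [left; apply Rinv_0_lt_compat|]; lra).
     assert (0 < m / Se k ths) by (apply Rdiv_lt_0_compat; lra). assert (0 < mT / ths) by (apply Rdiv_lt_0_compat; lra).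
     assert (m / Se k ths * (mT / ths) <= S k t / Se k ths * (Th t / ths)) by (apply Rmult_le_compat; lra).
     assert (0 < I k t / Ie k ths) by (apply Rdiv_lt_0_compat; lra).
     assert (I k t / Ie k ths <= 1 / Ie k ths) by (unfold Rdiv; apply Rmult_le_compat_r; [left; apply Rinv_0_lt_compat|]; lra).
     unfold Rdiv at 2 4. apply Rmult_le_compat. apply Rmult_le_pos; lra. left; apply Rinv_0_lt_compat, Rdiv_lt_0_compat; lra. auto.
     apply Rinv_le_contravar; auto. }
   assert (LW : LB 1 w).
   { unfold w. apply (LB_div 1 (fun t => (S k t / Se k ths) * (Th t / ths)) (fun t => I k t / Ie k ths) (m / Ie k ths)).
     apply Rdiv_lt_0_compat; lra.
     intros t Ht. destruct (Hlow t Ht) as [_ [_ C]]. unfold Rdiv. apply Rmult_le_compat_r; [left; apply Rinv_0_lt_compat|]; lra.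
     apply (LB_mult 1 (fun t => S k t / Se k ths) (fun t => Th t / ths)).
     apply LB_ext with (fun t => / Se k ths * S k t). intros; unfold Rdiv; ring. apply (LB_scal 1 (/ Se k ths) (S k)); auto.
     apply LB_ext with (fun t => / ths * Th t). intros; unfold Rdiv; ring. apply (LB_scal 1 (/ ths) Th); auto.
     apply LB_ext with (fun t => / Ie k ths * I k t). intros; unfold Rdiv; ring. apply (LB_scal 1 (/ Ie k ths) (I k)); auto. }
   assert (lim_infty (fun t => c3 * gfun (w t)) 0).
   { apply (barb k). auto. intros t Ht. destruct (Fk_comp k t Hk Ht) as [_ [_ C]].
     assert (0 <= gfun (w t)) by (apply gfun_nonneg; specialize (Hwl t Ht); lra).
     split. apply Rmult_le_pos; lra. unfold c3. rewrite Rmult_assoc. apply Rmult_le_compat_l; [lra|]. exact C.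
     apply (LB_scal 1 c3 (fun t => gfun (w t))). apply LB_gfun with mw; auto. }
   assert (H2 := lim_scal (/ c3) _ _ H). rewrite Rmult_0_r in H2.
   assert (H3 : lim_infty (fun t => gfun (w t)) 0).
   { eapply lim_ext_ev with (T0 := 0); [|exact H2]. intros t _. simpl. field. lra. }
   apply gfun_to1 with (t0 := 1) in H3. 2: { intros t Ht. specialize (Hwl t Ht). lra. }
   assert (H4 := lim_div3 (S k) Th w (Se k ths) ths ltac:(lra) ltac:(lra) CS CT H3).
   assert (H5 := lim_scal (Ie k ths) _ _ H4). rewrite Rmult_1_r in H5.
   eapply lim_ext_ev with (T0 := 1); [|exact H5]. intros t Ht. simpl. unfold w.
   pose proof (S_pos k t Hk ltac:(lra)). pose proof (I_pos k t Hk ltac:(lra)). pose proof (Th_pos t ltac:(lra)).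
   field. repeat split; lra. }
 assert (CQ : lim_infty (Q k) (Qe k ths)).
 { pose proof (eq_sum k ths Hk Hths) as Es.
   assert (L := lim_minus _ _ _ _ (lim_minus _ _ _ _ (lim_minus _ _ _ _ (lim_const (Ns k)) CS) CV) CI).
   replace (Qe k ths) with (Ns k - Se k ths - Ve k ths - Ie k ths) by lra.
   eapply lim_ext_ev with (T0 := 0); [|exact L]. intros t Ht. simpl. pose proof (conservation k t Hk Ht). lra. }
 auto. Qed.

End Lyap.
End Dyn.

Lemma main_res : Rnought n p b d Phi lam phi mu beta gamma omega delta > 1 ->
  exists Ss Vs Is Qs : nat -> R,
    endemic_eq n p b d Phi lam phi mu beta gamma eta omega delta Ss Vs Is Qs /\
    (forall Ss' Vs' Is' Qs' : nat -> R,
       endemic_eq n p b d Phi lam phi mu beta gamma eta omega delta Ss' Vs' Is' Qs' ->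
       forall k, (1 <= k <= n)%nat ->
         Ss' k = Ss k /\ Vs' k = Vs k /\ Is' k = Is k /\ Qs' k = Qs k) /\
    (forall S V I Q : nat -> R -> R,
       is_solution n p b d Phi lam phi mu beta gamma eta omega delta S V I Q ->
       (forall k, (1 <= k <= n)%nat ->
          0 <= S k 0 /\ 0 <= V k 0 /\ 0 <= I k 0 /\ 0 <= Q k 0 /\
          S k 0 + V k 0 + I k 0 + Q k 0 = Nstar b d Phi k) ->
       sumk n (fun k => p k * I k 0) > 0 ->
       forall k, (1 <= k <= n)%nat ->
         lim_infty (S k) (Ss k) /\ lim_infty (V k) (Vs k) /\
         lim_infty (I k) (Is k) /\ lim_infty (Q k) (Qs k)).
Proof. intros HR. destruct (exists_root HR) as [ths [Hths HG]].
 exists (fun k => Se k ths), (fun k => Ve k ths), (fun k => Ie k ths), (fun k => Qe k ths).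
 split; [|split].
 - apply endemic_ok; auto.
 - intros. apply (endemic_unique ths Hths HG Ss' Vs' Is' Qs'); auto.
 - intros S V I Q Hsol Hinit HI0 k Hk. exact (conv S V I Q Hsol Hinit HI0 ths Hths HG k Hk).
Qed.

End Equil.

Theorem theorem4p10
  (n : nat) (p : nat -> R) (b d Phi : R)
  (lam phi mu : nat -> R) (beta gamma eta omega delta : R)
  (Hn : (1 <= n)%nat)
  (Hp : forall k, (1 <= k <= n)%nat -> p k > 0)
  (Hpsum : sumk n p = 1)
  (Hbd : b > d) (Hd : d > 0)
  (HPhi : Phi > 0)
  (HPhieq : Phi = / kavg n p *
      sumk n (fun i => INR i * p i * b * Phi / (d + b * INR i * Phi)))
  (Hlam : forall k, (1 <= k <= n)%nat -> lam k > 0)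
  (Hphi : forall k, (1 <= k <= n)%nat -> phi k > 0)
  (Hmu : forall k, (1 <= k <= n)%nat -> mu k > 0)
  (Hbeta : beta > 0) (Hgamma : gamma > 0) (Heta : eta > 0) (Homega : omega > 0)
  (Hdelta : 0 <= delta <= 1)
  (Hge : omega >= gamma) (Heq : gamma = eta)
  (HR0 : Rnought n p b d Phi lam phi mu beta gamma omega delta > 1) :
  exists Ss Vs Is Qs : nat -> R,
    endemic_eq n p b d Phi lam phi mu beta gamma eta omega delta Ss Vs Is Qs /\
    (forall Ss' Vs' Is' Qs' : nat -> R,
       endemic_eq n p b d Phi lam phi mu beta gamma eta omega delta Ss' Vs' Is' Qs' ->
       forall k, (1 <= k <= n)%nat ->
         Ss' k = Ss k /\ Vs' k = Vs k /\ Is' k = Is k /\ Qs' k = Qs k) /\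
    (forall S V I Q : nat -> R -> R,
       is_solution n p b d Phi lam phi mu beta gamma eta omega delta S V I Q ->
       (forall k, (1 <= k <= n)%nat ->
          0 <= S k 0 /\ 0 <= V k 0 /\ 0 <= I k 0 /\ 0 <= Q k 0 /\
          S k 0 + V k 0 + I k 0 + Q k 0 = Nstar b d Phi k) ->
       sumk n (fun k => p k * I k 0) > 0 ->
       forall k, (1 <= k <= n)%nat ->
         lim_infty (S k) (Ss k) /\ lim_infty (V k) (Vs k) /\
         lim_infty (I k) (Is k) /\ lim_infty (Q k) (Qs k)).
Proof.
  eapply main_res; eauto.
Qed.
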